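(* Let $K$ satisfy $0\le K(i,j)=K(j,i)\le\kappa ij$ for some $\kappa>0$, and $\delta_i:=\inf_{j\ge i}K(i,j)>0$ for all $i\ge1$. Let $x_0\in\mathcal X_{1,1}^+$ with $x_{1,0}>0$ and $\|x_0\|_{1,1}=1$, and let $(\ell,x)$, $(t_i)_{i\ge 0}$ and $t_\infty=\lim_i t_i$ be the corresponding solution of the deterministic min-driven coagulation equation. (i) If there is $A_0>0$ such that $K(i,j)\le(\ln(i+1)\wedge\ln(j+1))/(4A_0)$ for all $i,j\ge1$, then $t_\infty=\infty$. (ii) If there are $a_0>0$ and $\alpha>0$ such that $K(i,j)\ge a_0(\ln(i+1)\wedge\ln(j+1))^{1+\alpha}$ for all $i,j\ge1$, then $t_\infty<\infty$.
   Context: Notation: $\|x\|_{1,1}=\sum_i i|x_i|$, $\mathcal X_{1,1}=\{x:\|x\|_{1,1}<\infty\}$, and $\mathcal X_{1,m}=\{x\in\mathcal X_{1,1}:x_i=0\ \text{for } i<m\}$; $+$ denotes nonnegative entries. For $i\ge1$ define $b^{(i)}(x)$ by - $b^{(i)}_j(x)=0$ for $j<i$; - $b^{(i)}_i(x)=-2K(i,i)x_i-\sum_{j>i}K(i,j)x_j$; - $b^{(i)}_j(x)=K(j-i,i)x_{j-i}-K(i,j)x_j$ for $j>i$. The solution of the deterministic min-driven coagulation equation is the unique pair $(\ell,x)$ with the following properties. There is an increasing sequence $0=t_0<t_1<\dots$ with $\ell(t)=i$ on $[t_{i-1},t_i)$, and $t_\infty=\lim_i t_i\in(0,\infty]$.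 Moreover $x\in C([0,t_\infty);\mathcal X_{1,1})$, $x(0)=x_0$, $x(t)\in\mathcal X^+_{1,\ell(t)}\setminus\mathcal X_{1,\ell(t)+1}$ for $t<t_\infty$, and $dx/dt=b^{(\ell(t))}(x(t))$ for $t\notin\{t_i\}$. Thus $\ell(t)$ is the minimal size present at time $t$. *)

(* Defs.v *)
From Stdlib Require Import Reals Lra Lia Arith.
Open Scope R_scope.

(* Sequences x = (x_i)_{i>=1} are represented as  x : nat -> R ; the
   coordinate x 0 is irrelevant (it has weight 0 in the norm and never
   enters the equations). *)

Definition norm11_is (x : nat -> R) (L : R) : Prop :=
  infinite_sum (fun n => INR n * Rabs (x n)) L.

Definition in_X11 (x : nat -> R) : Prop := exists L, norm11_is x L.

Definition in_X11_plus (x : nat -> R) : Prop :=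
  in_X11 x /\ forall i, (1 <= i)%nat -> 0 <= x i.

(* x belongs to X^+_{1,m} \ X_{1,m+1}: nonnegative, zero below m, x_m <> 0. *)
Definition in_X1m_plus_strict (m : nat) (x : nat -> R) : Prop :=
  in_X11_plus x /\ (forall i, (1 <= i)%nat -> (i < m)%nat -> x i = 0) /\ x m <> 0.

(* Time s lies in [0, t_infty) where t_infty = lim t_i (t increasing). *)
Definition in_domain (t : nat -> R) (s : R) : Prop :=
  0 <= s /\ exists i, s < t i.

(* The equation dx/dt = b^(ell(t))(x(t)) is read
   componentwise. *)
Definition is_min_driven_solution (K : nat -> nat -> R) (x0 : nat -> R)
    (ell : R -> nat) (t : nat -> R) (x : R -> nat -> R) : Prop :=
  t 0%nat = 0 /\
  (forall i, t i < t (S i)) /\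
  (forall i s, (1 <= i)%nat -> t (i - 1)%nat <= s < t i -> ell s = i) /\
  (forall s, in_domain t s -> in_X11 (x s)) /\
  (forall s, in_domain t s -> forall eps, 0 < eps -> exists delta, 0 < delta /\
     forall u, in_domain t u -> Rabs (u - s) < delta ->
       exists L, norm11_is (fun n => x u n - x s n) L /\ L < eps) /\
  (forall n, x 0 n = x0 n) /\
  (forall s, in_domain t s -> in_X1m_plus_strict (ell s) (x s)) /\
  (forall s, in_domain t s -> (forall i, s <> t i) ->
     let i := ell s in
     forall j, (1 <= j)%nat ->
       ((j < i)%nat -> derivable_pt_lim (fun u => x u j) s 0) /\
       (j = i -> exists S,
          infinite_sum (fun n => if (i <? n)%nat then K i n * x s n else 0) S /\
          derivable_pt_lim (fun u => x u j) s (- 2 * K i i * x s i - S)) /\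
       ((i < j)%nat -> derivable_pt_lim (fun u => x u j) s
          (K (j - i)%nat i * x s (j - i)%nat - K i j * x s j))).

(* Main.v *)
Require Import Defs.
From Stdlib Require Import Reals Lra Lia Arith Classical ClassicalEpsilon ZArith FunctionalExtensionality.
Open Scope R_scope.


Fixpoint sm (f : nat -> R) (n : nat) : R :=
  match n with O => 0 | S k => sm f k + f k end.

Definition sr (f : nat -> R) (a b : nat) : R := sm (fun k => f (a + k)%nat) (b - a).

Lemma sm_ext f g n : (forall k, (k < n)%nat -> f k = g k) -> sm f n = sm g n.
Proof. induction n; intros H; simpl; auto. rewrite IHn by (intros; apply H; lia). rewrite H by lia. auto. Qed.

Lemma sm_le f g n : (forall k, (k < n)%nat -> f k <= g k) -> sm f n <= sm g n.
Proof. induction n; intros H; simpl. lra. assert (H1 := H n (Nat.lt_succ_diag_r n)). assert (sm f n <= sm g n) by (apply IHn; intros; apply H; lia). lra. Qed.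

Lemma sm_plus f g n : sm (fun k => f k + g k) n = sm f n + sm g n.
Proof. induction n; simpl; lra. Qed.

Lemma sm_scal c f n : sm (fun k => c * f k) n = c * sm f n.
Proof. induction n; simpl; lra. Qed.

Lemma sm_opp f n : sm (fun k => - f k) n = - sm f n.
Proof. induction n; simpl; lra. Qed.

Lemma sm_split f n m : sm f (n + m) = sm f n + sm (fun k => f (n + k)%nat) m.
Proof. induction m; simpl. rewrite Nat.add_0_r; lra. rewrite Nat.add_succ_r; simpl. rewrite IHm; lra. Qed.

Lemma sr_ext f g a b : (forall k, (a <= k < b)%nat -> f k = g k) -> sr f a b = sr g a b.
Proof. intros H; unfold sr; apply sm_ext; intros; apply H; lia. Qed.

Lemma sr_le f g a b : (forall k, (a <= k < b)%nat -> f k <= g k) -> sr f a b <= sr g a b.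
Proof. intros H; unfold sr; apply sm_le; intros; apply H; lia. Qed.

Lemma sr_nonneg f a b : (forall k, (a <= k < b)%nat -> 0 <= f k) -> 0 <= sr f a b.
Proof. intros H. replace 0 with (sr (fun _ => 0) a b). apply sr_le; auto.
 unfold sr. clear H. induction (b - a)%nat; simpl; lra. Qed.

Lemma sr_plus f g a b : sr (fun k => f k + g k) a b = sr f a b + sr g a b.
Proof. unfold sr; apply sm_plus. Qed.
Lemma sr_scal c f a b : sr (fun k => c * f k) a b = c * sr f a b.
Proof. unfold sr; apply sm_scal. Qed.
Lemma sr_opp f a b : sr (fun k => - f k) a b = - sr f a b.
Proof. unfold sr; apply sm_opp. Qed.
Lemma sr_minus f g a b : sr (fun k => f k - g k) a b = sr f a b - sr g a b.
Proof. unfold Rminus. rewrite sr_plus, sr_opp. auto. Qed.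

Lemma sr_empty f a b : (b <= a)%nat -> sr f a b = 0.
Proof. intros; unfold sr; replace (b - a)%nat with 0%nat by lia; reflexivity. Qed.

Lemma sr_split f a b c : (a <= b <= c)%nat -> sr f a c = sr f a b + sr f b c.
Proof. intros H; unfold sr. replace (c - a)%nat with ((b - a) + (c - b))%nat by lia.
 rewrite sm_split. f_equal. apply sm_ext. intros. f_equal. lia. Qed.

Lemma sr_one f a : sr f a (S a) = f a.
Proof. unfold sr. replace (S a - a)%nat with 1%nat by lia. simpl. rewrite Nat.add_0_r; lra. Qed.

Lemma sr_shift f a b m : sr f (a + m) (b + m) = sr (fun k => f (k + m)%nat) a b.
Proof. unfold sr. replace (b + m - (a + m))%nat with (b - a)%nat by lia. apply sm_ext; intros; f_equal; lia. Qed.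

Lemma sr_zero f a b : (forall k, (a <= k < b)%nat -> f k = 0) -> sr f a b = 0.
Proof. intros H. rewrite (sr_ext f (fun _ => 0)) by auto. unfold sr. clear H. induction (b - a)%nat; simpl; lra. Qed.

Lemma sr_abs f a b : Rabs (sr f a b) <= sr (fun k => Rabs (f k)) a b.
Proof. unfold sr. induction (b - a)%nat; simpl. rewrite Rabs_R0; lra.
 eapply Rle_trans. apply Rabs_triang. lra. Qed.

Lemma sum_f_R0_sm u M : sum_f_R0 u M = sm u (S M).
Proof. induction M; simpl. lra. rewrite IHM. simpl. lra. Qed.

Lemma sm_sr u n : sm u n = sr u 0 n.
Proof. unfold sr. rewrite Nat.sub_0_r. reflexivity. Qed.

Lemma inf_sum_le_bound u L B : infinite_sum u L -> (forall M, sum_f_R0 u M <= B) -> L <= B.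
Proof. intros HS HB. destruct (Rle_dec L B) as [|Hn]; auto. exfalso.
 destruct (HS (L - B)) as [N HN]; [lra|]. specialize (HN N (le_n N)). specialize (HB N).
 unfold Rdist in HN. apply Rabs_def2 in HN. lra. Qed.

Lemma partial_le_inf_sum u L M : (forall n, 0 <= u n) -> infinite_sum u L -> sum_f_R0 u M <= L.
Proof. intros Hu HS. destruct (Rle_dec (sum_f_R0 u M) L) as [|Hn]; auto. exfalso.
 destruct (HS (sum_f_R0 u M - L)) as [N HN]; [lra|]. specialize (HN (max N M) (Nat.le_max_l _ _)).
 assert (sum_f_R0 u M <= sum_f_R0 u (max N M)).
 { assert (forall k, sum_f_R0 u M <= sum_f_R0 u (M + k)).
   { induction k. rewrite Nat.add_0_r; lra. rewrite Nat.add_succ_r. simpl. specialize (Hu (S (M+k))). lra. }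
   replace (max N M) with (M + (max N M - M))%nat by lia. auto. }
 unfold Rdist in HN. apply Rabs_def2 in HN. lra. Qed.

Lemma inf_sum_nonneg u L : (forall n, 0 <= u n) -> infinite_sum u L -> 0 <= L.
Proof. intros Hu HS. eapply Rle_trans; [| apply (partial_le_inf_sum u L 0); auto]. simpl. auto. Qed.


Lemma sm_deriv (g : R -> nat -> R) (d : nat -> R) s n :
  (forall j, (j < n)%nat -> derivable_pt_lim (fun u => g u j) s (d j)) ->
  derivable_pt_lim (fun u => sm (g u) n) s (sm d n).
Proof. induction n; intros H; simpl.
 - apply derivable_pt_lim_const.
 - apply (derivable_pt_lim_plus (fun u => sm (g u) n) (fun u => g u n)).
   apply IHn; intros; apply H; lia. apply H; lia. Qed.

Lemma sr_deriv (g : R -> nat -> R) (d : nat -> R) s a b :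
  (forall j, (a <= j < b)%nat -> derivable_pt_lim (fun u => g u j) s (d j)) ->
  derivable_pt_lim (fun u => sr (g u) a b) s (sr d a b).
Proof. intros H. unfold sr. apply (sm_deriv (fun u k => g u (a + k)%nat)). intros; apply H; lia. Qed.

Definition RC (f : R -> R) (a b : R) : Prop :=
  forall s, a <= s <= b -> forall eps, 0 < eps -> exists delta, 0 < delta /\
    forall u, a <= u <= b -> Rabs (u - s) < delta -> Rabs (f u - f s) < eps.

Definition clamp a b u := Rmax a (Rmin b u).

Lemma clamp_in a b u : a <= b -> a <= clamp a b u <= b.
Proof. intros; unfold clamp. split. apply Rmax_l. apply Rmax_lub. auto. apply Rmin_l. Qed.

Lemma clamp_id a b u : a <= u <= b -> clamp a b u = u.
Proof. intros; unfold clamp. rewrite Rmin_right by lra. rewrite Rmax_right by lra. auto. Qed.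

Lemma clamp_lip a b u c : a <= c <= b -> Rabs (clamp a b u - c) <= Rabs (u - c).
Proof. intros Hc. unfold clamp. destruct (Rle_dec b u).
 - rewrite Rmin_left by auto. rewrite Rmax_right by lra. rewrite !Rabs_right by lra. lra.
 - rewrite Rmin_right by lra. destruct (Rle_dec a u).
   + rewrite Rmax_right by lra. lra.
   + rewrite Rmax_left by lra. rewrite !Rabs_left1 by lra. lra. Qed.

Lemma clamp_cont f a b c : a <= b -> RC f a b -> a <= c <= b -> continuity_pt (fun u => f (clamp a b u)) c.
Proof. intros Hab HR Hc. unfold continuity_pt, continue_in, limit1_in, limit_in. intros eps He.
 destruct (HR c Hc eps He) as [d [Hd Hu]]. exists d; split; auto.
 intros u [_ Hu2]. simpl in *. unfold Rdist in *. rewrite (clamp_id a b c Hc).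
 apply Hu. apply clamp_in; auto. eapply Rle_lt_trans. apply clamp_lip; auto. auto. Qed.

Lemma deriv_local f g s l e : 0 < e -> (forall u, Rabs (u - s) < e -> f u = g u) ->
  derivable_pt_lim f s l -> derivable_pt_lim g s l.
Proof. intros He Hfg Hf eps Heps. destruct (Hf eps Heps) as [d Hd].
 assert (Hm : 0 < Rmin d e) by (apply Rmin_pos; [apply cond_pos|auto]).
 exists (mkposreal _ Hm). intros h Hh Hhd. simpl in Hhd.
 rewrite <- !Hfg. apply Hd; auto. eapply Rlt_le_trans; [apply Hhd|apply Rmin_l].
 replace (s - s) with 0 by lra; rewrite Rabs_R0; lra.
 replace (s + h - s) with h by lra. eapply Rlt_le_trans; [apply Hhd|apply Rmin_r]. Qed.

Lemma mono_RC f a b : a <= b -> RC f a b ->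
  (forall s, a < s < b -> exists l, derivable_pt_lim f s l /\ 0 <= l) -> f a <= f b.
Proof. intros Hab HR HD. destruct (Req_dec a b) as [->|Hne]; [lra|].
 assert (Hlt : a < b) by lra.
 set (g := fun u => f (clamp a b u)).
 assert (Hg : forall c, a < c < b -> {l | derivable_pt_lim g c l /\ 0 <= l}).
 { intros c Hc. destruct (constructive_indefinite_description _ (HD c Hc)) as [l [Hl1 Hl2]].
   exists l. split; auto. apply (deriv_local f g c l (Rmin (c - a) (b - c))).
   apply Rmin_pos; lra. intros u Hu. unfold g. rewrite clamp_id; auto.
   assert (Rabs (u - c) < c - a) by (eapply Rlt_le_trans; [apply Hu|apply Rmin_l]).
   assert (Rabs (u - c) < b - c) by (eapply Rlt_le_trans; [apply Hu|apply Rmin_r]).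
   apply Rabs_def2 in H. apply Rabs_def2 in H0. lra. auto. }
 set (pr1 := fun c (P : a < c < b) => exist (fun l => derivable_pt_lim g c l) (proj1_sig (Hg c P)) (proj1 (proj2_sig (Hg c P)))).
 set (pr2 := fun c (P : a < c < b) => derivable_pt_id c).
 destruct (MVT g id a b pr1 pr2 Hlt) as [c [P HP]].
 - intros c Hc. apply clamp_cont; auto.
 - intros c _. apply derivable_continuous_pt. apply derivable_pt_id.
 - unfold derive_pt in HP. unfold pr1, pr2 in HP. simpl in HP.
   assert (Hl := proj2 (proj2_sig (Hg c P))). set (l := proj1_sig (Hg c P)) in *.
   unfold id in HP. unfold g in HP. rewrite !clamp_id in HP by lra.
   assert (E : forall pr : derivable_pt id c, proj1_sig pr = 1).
   { intro pr. rewrite <- (derive_pt_id c). apply pr_nu. }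
   rewrite E in HP.
   assert (0 <= (b - a) * l) by (apply Rmult_le_pos; lra). nra. Qed.

Lemma mono_RC_dec f a b : a <= b -> RC f a b ->
  (forall s, a < s < b -> exists l, derivable_pt_lim f s l /\ l <= 0) -> f b <= f a.
Proof. intros Hab HR HD. assert (- f a <= - f b); [|lra].
 apply (mono_RC (fun u => - f u)); auto.
 - intros s Hs eps He. destruct (HR s Hs eps He) as [d [Hd H]]. exists d; split; auto.
   intros u Hu Hus. replace (- f u - - f s) with (- (f u - f s)) by ring. rewrite Rabs_Ropp. auto.
 - intros s Hs. destruct (HD s Hs) as [l [H1 H2]]. exists (- l). split; [|lra].
   apply derivable_pt_lim_opp with (f := f). auto. Qed.

Lemma RC_sub f a b a' b' : a <= a' -> b' <= b -> RC f a b -> RC f a' b'.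
Proof. intros H1 H2 H s Hs eps He. destruct (H s ltac:(lra) eps He) as [d [Hd Hu]].
 exists d; split; auto. intros u Hu' Hus. apply Hu; auto; lra. Qed.

Lemma RC_plus f g a b : RC f a b -> RC g a b -> RC (fun u => f u + g u) a b.
Proof. intros Hf Hg s Hs eps He. destruct (Hf s Hs (eps/2) ltac:(lra)) as [d1 [Hd1 H1]].
 destruct (Hg s Hs (eps/2) ltac:(lra)) as [d2 [Hd2 H2]].
 exists (Rmin d1 d2). split. apply Rmin_pos; auto. intros u Hu Hus.
 assert (A1 := H1 u Hu (Rlt_le_trans _ _ _ Hus (Rmin_l _ _))).
 assert (A2 := H2 u Hu (Rlt_le_trans _ _ _ Hus (Rmin_r _ _))).
 replace (f u + g u - (f s + g s)) with ((f u - f s) + (g u - g s)) by ring.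
 eapply Rle_lt_trans. apply Rabs_triang. lra. Qed.

Lemma RC_scal c f a b : RC f a b -> RC (fun u => c * f u) a b.
Proof. intros Hf s Hs eps He. destruct (Hf s Hs (eps / (Rabs c + 1))) as [d [Hd H]].
 apply Rdiv_lt_0_compat; auto. assert (0 <= Rabs c) by apply Rabs_pos. lra.
 exists d; split; auto. intros u Hu Hus. specialize (H u Hu Hus).
 replace (c * f u - c * f s) with (c * (f u - f s)) by ring. rewrite Rabs_mult.
 assert (0 <= Rabs c) by apply Rabs_pos.
 assert (Rabs c * Rabs (f u - f s) <= Rabs c * (eps / (Rabs c + 1))).
 { apply Rmult_le_compat_l; lra. }
 assert (Rabs c * (eps / (Rabs c + 1)) < eps).
 { apply Rmult_lt_reg_r with (Rabs c + 1). lra. replace (Rabs c * (eps / (Rabs c + 1)) * (Rabs c + 1)) with (Rabs c * eps) by (field; lra). nra. }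
 lra. Qed.

Lemma RC_const c a b : RC (fun _ => c) a b.
Proof. intros s Hs eps He. exists 1. split. lra. intros. replace (c - c) with 0 by ring. rewrite Rabs_R0. auto. Qed.

Lemma RC_exp r a b : RC (fun u => exp (r * u)) a b.
Proof. intros s Hs eps He.
 assert (Hc : continuity_pt (fun u => exp (r * u)) s).
 { apply (derivable_continuous_pt (fun u => exp (r*u))). apply (derivable_pt_comp (fun u => r * u) exp).
   apply derivable_pt_scal. apply derivable_pt_id. apply derivable_pt_exp. }
 unfold continuity_pt, continue_in, limit1_in, limit_in in Hc. destruct (Hc eps He) as [d [Hd H]].
 exists d; split; auto. intros u Hu Hus. destruct (Req_dec u s) as [->|Hne].
 replace (exp (r*s) - exp (r*s)) with 0 by ring; rewrite Rabs_R0; auto.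
 apply (H u). split. unfold D_x, no_cond. split; auto. simpl; unfold Rdist; auto. Qed.

Lemma RC_mult f g a b : RC f a b -> RC g a b -> RC (fun u => f u * g u) a b.
Proof. intros Hf Hg s Hs eps He.
 set (M := Rabs (f s) + Rabs (g s) + 1).
 assert (HM : 0 < M) by (unfold M; assert (0 <= Rabs (f s)) by apply Rabs_pos; assert (0 <= Rabs (g s)) by apply Rabs_pos; lra).
 set (e := Rmin 1 (eps / (4 * M))).
 assert (He' : 0 < e). { unfold e. apply Rmin_pos. lra. apply Rdiv_lt_0_compat; lra. }
 destruct (Hf s Hs e He') as [d1 [Hd1 H1]]. destruct (Hg s Hs e He') as [d2 [Hd2 H2]].
 exists (Rmin d1 d2). split. apply Rmin_pos; auto. intros u Hu Hus.
 assert (A1 := H1 u Hu (Rlt_le_trans _ _ _ Hus (Rmin_l _ _))).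
 assert (A2 := H2 u Hu (Rlt_le_trans _ _ _ Hus (Rmin_r _ _))).
 replace (f u * g u - f s * g s) with ((f u - f s) * g u + f s * (g u - g s)) by ring.
 eapply Rle_lt_trans. apply Rabs_triang. rewrite !Rabs_mult.
 assert (e <= 1) by apply Rmin_l. assert (e <= eps / (4*M)) by apply Rmin_r.
 assert (Rabs (g u) <= Rabs (g s) + 1).
 { replace (g u) with (g s + (g u - g s)) by ring. eapply Rle_trans. apply Rabs_triang. lra. }
 assert (0 <= Rabs (f u - f s)) by apply Rabs_pos. assert (0 <= Rabs (f s)) by apply Rabs_pos.
 assert (0 <= Rabs (g s)) by apply Rabs_pos.
 assert (Rabs (f u - f s) * Rabs (g u) <= e * M).
 { apply Rle_trans with (e * (Rabs (g s) + 1)). apply Rmult_le_compat; try lra. apply Rabs_pos.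
   apply Rmult_le_compat_l; unfold M; lra. }
 assert (Rabs (f s) * Rabs (g u - g s) <= e * M).
 { apply Rle_trans with (Rabs (f s) * e). apply Rmult_le_compat_l; lra. rewrite Rmult_comm. apply Rmult_le_compat_l; unfold M; lra. }
 assert (e * M <= eps / 4).
 { apply Rle_trans with (eps / (4 * M) * M). apply Rmult_le_compat_r; lra. field_simplify; lra. }
 lra. Qed.


Definition Hyp (K : nat -> nat -> R) (x0 : nat -> R) (ell : R -> nat) (t : nat -> R) (x : R -> nat -> R) : Prop :=
  (forall i j, (1 <= i)%nat -> (1 <= j)%nat -> 0 <= K i j /\ K i j = K j i) /\
  in_X11_plus x0 /\ norm11_is x0 1 /\ is_min_driven_solution K x0 ell t x.

Definition Dv (K : nat -> nat -> R) (y : nat -> R) (i : nat) (S : R) (j : nat) : R :=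
  if (j <? i)%nat then 0 else if (j =? i)%nat then - 2 * K i i * y i - S
  else K (j - i)%nat i * y (j - i)%nat - K i j * y j.

Definition uS (K : nat -> nat -> R) (y : nat -> R) (i : nat) := fun n => if (i <? n)%nat then K i n * y n else 0.

Lemma t_strict K x0 ell t x : Hyp K x0 ell t x -> forall k l, (k < l)%nat -> t k < t l.
Proof. intros [_ [_ [_ Hs]]] k l Hkl. destruct Hs as [_ [Hinc _]].
 induction Hkl. apply Hinc. specialize (Hinc m). lra. Qed.

Lemma t_le K x0 ell t x : Hyp K x0 ell t x -> forall k l, (k <= l)%nat -> t k <= t l.
Proof. intros H k l Hkl. destruct (Nat.eq_dec k l) as [->|]. lra. apply Rlt_le, (t_strict _ _ _ _ _ H); lia. Qed.

Lemma t_nonneg K x0 ell t x : Hyp K x0 ell t x -> forall k, 0 <= t k.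
Proof. intros H k. assert (H0 : t 0%nat = 0) by (destruct H as [_ [_ [_ Hs]]]; apply Hs).
 rewrite <- H0. apply (t_le _ _ _ _ _ H); lia. Qed.

Lemma locate K x0 ell t x : Hyp K x0 ell t x -> forall s, in_domain t s ->
  exists i, (1 <= i)%nat /\ t (i - 1)%nat <= s < t i.
Proof. intros H s [Hs [k Hk]]. assert (H0 : t 0%nat = 0) by (destruct H as [_ [_ [_ Hsol]]]; apply Hsol).
 induction k. lra. destruct (Rlt_dec s (t k)) as [Hl|Hl]. auto.
 exists (S k). split. lia. replace (S k - 1)%nat with k by lia. lra. Qed.

Lemma ell_eq K x0 ell t x : Hyp K x0 ell t x -> forall i s, (1 <= i)%nat -> t (i - 1)%nat <= s < t i -> ell s = i.
Proof. intros [_ [_ [_ Hs]]]. destruct Hs as [_ [_ [He _]]]. auto. Qed.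

Lemma dom_stage K x0 ell t x : Hyp K x0 ell t x -> forall i s, (1 <= i)%nat -> t (i - 1)%nat <= s <= t i -> in_domain t s.
Proof. intros H i s Hi Hs. split. pose proof (t_nonneg _ _ _ _ _ H (i-1)). lra.
 exists (S i). pose proof (t_strict _ _ _ _ _ H i (S i) ltac:(lia)). lra. Qed.

Lemma x_facts K x0 ell t x : Hyp K x0 ell t x -> forall s, in_domain t s ->
  (1 <= ell s)%nat /\ (forall j, (1 <= j)%nat -> 0 <= x s j) /\
  (forall j, (1 <= j)%nat -> (j < ell s)%nat -> x s j = 0) /\ 0 < x s (ell s).
Proof. intros H s Hd. destruct (locate _ _ _ _ _ H s Hd) as [i [Hi Hs]].
 assert (Heq := ell_eq _ _ _ _ _ H i s Hi Hs).
 destruct H as [_ [_ [_ Hsol]]]. destruct Hsol as [_ [_ [_ [_ [_ [_ [Hst _]]]]]]].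
 specialize (Hst s Hd). destruct Hst as [[_ Hpos] [Hz Hne]].
 rewrite Heq in *. split; auto. split; auto. split; auto.
 assert (0 <= x s i) by (apply Hpos; auto). lra. Qed.

Lemma deriv_comp K x0 ell t x : Hyp K x0 ell t x -> forall s, in_domain t s -> (forall k, s <> t k) ->
  exists S, infinite_sum (uS K (x s) (ell s)) S /\
   forall j, (1 <= j)%nat -> derivable_pt_lim (fun u => x u j) s (Dv K (x s) (ell s) S j).
Proof. intros H s Hd Hk. destruct (x_facts _ _ _ _ _ H s Hd) as [Hi _].
 destruct H as [_ [_ [_ Hsol]]]. destruct Hsol as [_ [_ [_ [_ [_ [_ [_ Hder]]]]]]].
 specialize (Hder s Hd Hk). simpl in Hder.
 destruct (Hder (ell s) Hi) as [_ [HS _]]. destruct (HS eq_refl) as [S [HS1 HS2]].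
 exists S. split. exact HS1. intros j Hj. destruct (Hder j Hj) as [H1 [H2 H3]].
 unfold Dv. destruct (j <? ell s)%nat eqn:E1.
 - apply H1. apply Nat.ltb_lt; auto.
 - destruct (j =? ell s)%nat eqn:E2.
   + apply Nat.eqb_eq in E2. subst j. auto.
   + apply H3. apply Nat.ltb_ge in E1. apply Nat.eqb_neq in E2. lia. Qed.

Lemma wsum_deriv K x0 ell t x (H : Hyp K x0 ell t x) s (w : nat -> R) a b :
  in_domain t s -> (forall k, s <> t k) -> (1 <= a)%nat ->
  exists S, infinite_sum (uS K (x s) (ell s)) S /\
   derivable_pt_lim (fun u => sr (fun j => w j * x u j) a b) s (sr (fun j => w j * Dv K (x s) (ell s) S j) a b).
Proof. intros Hd Hk Ha. destruct (deriv_comp _ _ _ _ _ H s Hd Hk) as [S [HS HD]].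
 exists S; split; auto. apply (sr_deriv (fun u j => w j * x u j)). intros j Hj.
 apply derivable_pt_lim_scal. apply HD. lia. Qed.

Lemma sr_le_sum_f g a b : (forall k, 0 <= g k) -> sr g a b <= sum_f_R0 g b.
Proof. intros Hg. rewrite sum_f_R0_sm, sm_sr. destruct (le_lt_dec a b).
 - rewrite (sr_split g 0 a (S b)) by lia. rewrite (sr_split g a b (S b)) by lia. rewrite sr_one.
   assert (0 <= sr g 0 a) by (apply sr_nonneg; auto). specialize (Hg b). lra.
 - rewrite sr_empty by lia. apply sr_nonneg; auto. Qed.

Lemma wsum_RC K x0 ell t x (H : Hyp K x0 ell t x) (w : nat -> R) C a b p q :
  (1 <= a)%nat -> 0 <= C -> (forall j, (1 <= j)%nat -> Rabs (w j) <= C * INR j) ->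
  p <= q -> in_domain t p -> in_domain t q ->
  RC (fun u => sr (fun j => w j * x u j) a b) p q.
Proof. intros Ha HC Hw Hpq [Hp _] [Hq [k Hk]] s Hs eps He.
 assert (Hds : in_domain t s) by (split; [lra| exists k; lra]).
 destruct H as [_ [_ [_ Hsol]]]. destruct Hsol as [_ [_ [_ [_ [Hcont _]]]]].
 destruct (Hcont s Hds (eps / (C + 1))) as [d [Hd Hu]]. apply Rdiv_lt_0_compat; lra.
 exists d; split; auto. intros u Hu' Hus.
 assert (Hdu : in_domain t u) by (split; [lra| exists k; lra]).
 destruct (Hu u Hdu Hus) as [L [HL HLe]].
 rewrite <- sr_minus. eapply Rle_lt_trans. apply sr_abs.
 apply Rle_lt_trans with (C * L).
 - apply Rle_trans with (sr (fun j => C * (INR j * Rabs (x u j - x s j))) a b).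
   + apply sr_le. intros j Hj. replace (w j * x u j - w j * x s j) with (w j * (x u j - x s j)) by ring.
     rewrite Rabs_mult. rewrite <- Rmult_assoc. apply Rmult_le_compat_r. apply Rabs_pos. apply Hw; lia.
   + rewrite sr_scal. apply Rmult_le_compat_l; auto.
     eapply Rle_trans. apply sr_le_sum_f. intros; apply Rmult_le_pos. apply pos_INR. apply Rabs_pos.
     apply partial_le_inf_sum; auto. intros; apply Rmult_le_pos. apply pos_INR. apply Rabs_pos.
 - assert (0 <= L). { eapply inf_sum_nonneg; [|apply HL]. intros; apply Rmult_le_pos. apply pos_INR. apply Rabs_pos. }
   apply Rle_lt_trans with (C * (eps / (C + 1))). apply Rmult_le_compat_l; lra.
   apply Rmult_lt_reg_r with (C + 1). lra. replace (C * (eps / (C + 1)) * (C + 1)) with (C * eps) by (field; lra). nra. Qed.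

Lemma RC_id a b : RC (fun u => u) a b.
Proof. intros s Hs eps He. exists eps. split; auto. Qed.

Lemma interior K x0 ell t x (H : Hyp K x0 ell t x) i s : (1 <= i)%nat -> t (i - 1)%nat < s < t i ->
  in_domain t s /\ (forall k, s <> t k) /\ ell s = i.
Proof. intros Hi Hs. split. apply (dom_stage _ _ _ _ _ H i); auto; lra.
 split. intros k Hk. destruct (le_lt_dec k (i - 1)).
 pose proof (t_le _ _ _ _ _ H k (i-1) l). lra.
 pose proof (t_le _ _ _ _ _ H i k ltac:(lia)). lra.
 apply (ell_eq _ _ _ _ _ H); auto. lra. Qed.

Lemma stage_dec K x0 ell t x (H : Hyp K x0 ell t x) (g : R -> R) i : (1 <= i)%nat ->
  RC g (t (i-1)%nat) (t i) ->
  (forall s, t (i-1)%nat < s < t i -> exists l, derivable_pt_lim g s l /\ l <= 0) ->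
  forall p q, t (i-1)%nat <= p /\ p <= q /\ q <= t i -> g q <= g p.
Proof. intros Hi HR HD p q Hpq. apply mono_RC_dec. lra. eapply RC_sub; [| |apply HR]; lra.
 intros s Hs. apply HD. lra. Qed.

Lemma chain K x0 ell t x (H : Hyp K x0 ell t x) (g : R -> R) m M :
  (forall i, (m < i <= M)%nat -> forall p q, t (i-1)%nat <= p /\ p <= q /\ q <= t i -> g q <= g p) ->
  forall p q, t m <= p /\ p <= q /\ q <= t M -> g q <= g p.
Proof. induction M; intros HS p q Hpq.
 - destruct m. assert (p = q) by lra. subst; lra.
   pose proof (t_strict _ _ _ _ _ H 0 (S m) ltac:(lia)). lra.
 - destruct (le_lt_dec m M) as [HmM|HmM].
   + destruct (Rle_dec q (t M)).
     * apply IHM; auto. intros i Hi. apply HS. lia. lra.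
     * destruct (Rle_dec (t M) p).
       -- apply (HS (S M)). lia. replace (S M - 1)%nat with M by lia. lra.
       -- apply Rle_trans with (g (t M)).
          ++ apply (HS (S M)). lia. replace (S M - 1)%nat with M by lia. lra.
          ++ apply IHM. intros i Hi. apply HS. lia. lra.
   + assert (m = S M \/ (S M < m)%nat) as [->|Hlt] by lia.
     assert (p = q) by lra. subst; lra.
     pose proof (t_strict _ _ _ _ _ H (S M) m Hlt). lra. Qed.


Definition Good (K : nat -> nat -> R) (y : nat -> R) (i : nat) : Prop :=
  (1 <= i)%nat /\ (forall a b, (1 <= a)%nat -> (1 <= b)%nat -> 0 <= K a b /\ K a b = K b a) /\
  (forall j, (1 <= j)%nat -> 0 <= y j) /\ (forall j, (1 <= j)%nat -> (j < i)%nat -> y j = 0).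

Lemma uS_nonneg K y i : Good K y i -> forall n, 0 <= uS K y i n.
Proof. intros [Hi [HK [Hy _]]] n. unfold uS. destruct (i <? n)%nat eqn:E. apply Nat.ltb_lt in E.
 apply Rmult_le_pos. apply HK; lia. apply Hy; lia. lra. Qed.

Lemma sum_uS K y i M : sum_f_R0 (uS K y i) M = sr (uS K y i) 0 (Datatypes.S M).
Proof. rewrite sum_f_R0_sm, sm_sr. auto. Qed.

Lemma uS_partial K y i S : Good K y i -> infinite_sum (uS K y i) S ->
  forall M, sr (fun k => K i k * y k) (i + 1) M <= S.
Proof. intros HG HS M. assert (Hn := uS_nonneg K y i HG).
 apply Rle_trans with (sum_f_R0 (uS K y i) M); [|apply partial_le_inf_sum; auto].
 rewrite sum_uS. destruct (le_lt_dec M (i+1)). rewrite sr_empty by lia. apply sr_nonneg; auto.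
 rewrite (sr_split _ 0 (i+1) (Datatypes.S M)) by lia. rewrite (sr_split _ (i+1) M (Datatypes.S M)) by lia.
 rewrite sr_one. assert (0 <= sr (uS K y i) 0 (i+1)) by (apply sr_nonneg; auto).
 assert (sr (fun k => K i k * y k) (i + 1) M = sr (uS K y i) (i + 1) M).
 { apply sr_ext. intros k Hk. unfold uS. replace (i <? k)%nat with true; auto. symmetry; apply Nat.ltb_lt; lia. }
 specialize (Hn M). lra. Qed.

Lemma uS_bound K y i S B : Good K y i -> infinite_sum (uS K y i) S ->
  (forall M, sr (fun k => K i k * y k) (i + 1) M <= B) -> S <= B.
Proof. intros HG HS HB. apply (inf_sum_le_bound _ _ _ HS). intros M. rewrite sum_uS.
 assert (H0 : 0 <= B) by (specialize (HB 0%nat); rewrite sr_empty in HB by lia; auto).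
 destruct (le_lt_dec (Datatypes.S M) (i+1)).
 - rewrite sr_zero. auto. intros k Hk. unfold uS. replace (i <? k)%nat with false; auto. symmetry; apply Nat.ltb_ge; lia.
 - rewrite (sr_split _ 0 (i+1) (Datatypes.S M)) by lia. rewrite sr_zero.
   rewrite Rplus_0_l. rewrite <- (sr_ext (fun k => K i k * y k)). apply HB.
   intros k Hk. unfold uS. replace (i <? k)%nat with true; auto. symmetry; apply Nat.ltb_lt; lia.
   intros k Hk. unfold uS. replace (i <? k)%nat with false; auto. symmetry; apply Nat.ltb_ge; lia. Qed.

Lemma sr_one' f a : sr f a (a + 1) = f a.
Proof. replace (a+1)%nat with (Datatypes.S a) by lia. apply sr_one. Qed.

Lemma Dv_low K y i S j : (j < i)%nat -> Dv K y i S j = 0.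
Proof. intros H. unfold Dv. replace (j <? i)%nat with true; auto. symmetry; apply Nat.ltb_lt; auto. Qed.
Lemma Dv_i K y i S : Dv K y i S i = - 2 * K i i * y i - S.
Proof. unfold Dv. rewrite Nat.ltb_irrefl, Nat.eqb_refl. auto. Qed.
Lemma Dv_high K y i S j : (i < j)%nat -> Dv K y i S j = K (j - i)%nat i * y (j - i)%nat - K i j * y j.
Proof. intros H. unfold Dv. replace (j <? i)%nat with false by (symmetry; apply Nat.ltb_ge; lia).
 replace (j =? i)%nat with false by (symmetry; apply Nat.eqb_neq; lia). auto. Qed.

Lemma sumD_P K y i S N : Good K y i -> (i <= N)%nat ->
  - 2 * K i i * y i - S - sr (fun j => K i j * y j) (i + 1) (N + 1) <= sr (fun j => 1 * Dv K y i S j) 1 (N + 1).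
Proof. intros HG HN. destruct HG as [Hi [HK [Hy Hz]]].
 rewrite (sr_split _ 1 i (N+1)) by lia. rewrite (sr_split _ i (Datatypes.S i) (N+1)) by lia. rewrite sr_one.
 rewrite (sr_zero _ 1 i). 2:{ intros; rewrite Dv_low by lia; ring. } rewrite Dv_i.
 replace (Datatypes.S i) with (i+1)%nat by lia.
 assert (- sr (fun j => K i j * y j) (i + 1) (N + 1) <= sr (fun j => 1 * Dv K y i S j) (i + 1) (N + 1)).
 { rewrite <- sr_opp. apply sr_le. intros j Hj. rewrite Dv_high by lia.
   assert (0 <= K (j - i)%nat i * y (j - i)%nat). apply Rmult_le_pos. apply HK; lia. apply Hy; lia. lra. }
 lra. Qed.

Lemma G_shift K y i a b : (i < a)%nat -> (a <= b)%nat -> forall (w : nat -> R),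
  sr (fun j => w j * (K (j - i)%nat i * y (j - i)%nat)) a b =
  sr (fun k => w (k + i)%nat * (K k i * y k)) (a - i) (b - i).
Proof. intros Ha Hb w. replace a with ((a - i) + i)%nat at 1 by lia. replace b with ((b - i) + i)%nat at 1 by lia.
 rewrite sr_shift. apply sr_ext. intros k Hk. replace (k + i - i)%nat with k by lia. auto. Qed.

Lemma sumD_Q K y i S N : Good K y i -> (forall M, sr (fun k => K i k * y k) (i + 1) M <= S) -> 0 <= S ->
  (2 * i <= N)%nat ->
  sr (fun j => INR j * Dv K y i S j) 1 (N + 1) <= - sr (fun j => INR j * (K i j * y j)) (N + 1 - i) (N + 1).
Proof. intros HG HSp HS0 HN. destruct HG as [Hi [HK [Hy Hz]]].
 rewrite (sr_split _ 1 i (N+1)) by lia. rewrite (sr_split _ i (Datatypes.S i) (N+1)) by lia. rewrite sr_one.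
 rewrite (sr_zero _ 1 i). 2:{ intros; rewrite Dv_low by lia; ring. } rewrite Dv_i.
 replace (Datatypes.S i) with (i+1)%nat by lia.
 rewrite (sr_ext _ (fun j => INR j * (K (j - i)%nat i * y (j - i)%nat) - INR j * (K i j * y j))).
 2:{ intros j Hj. rewrite Dv_high by lia. ring. }
 rewrite sr_minus. rewrite G_shift by lia.
 replace (i + 1 - i)%nat with 1%nat by lia.
 rewrite (sr_split _ 1 i (N + 1 - i)) by lia. rewrite (sr_split _ i (i+1) (N + 1 - i)) by lia.
 rewrite (sr_one' _ i).
 rewrite (sr_zero _ 1 i). 2:{ intros k Hk. rewrite Hz by lia. ring. }
 rewrite (sr_split _ (i+1) (N+1-i) (N+1)) by lia.
 replace (INR (i + i)) with (2 * INR i) by (rewrite plus_INR; ring).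
 assert (E : sr (fun k => INR (k + i) * (K k i * y k)) (i + 1) (N + 1 - i) - sr (fun j => INR j * (K i j * y j)) (i + 1) (N + 1 - i)
   = INR i * sr (fun k => K i k * y k) (i + 1) (N + 1 - i)).
 { rewrite <- sr_minus, <- sr_scal. apply sr_ext. intros k Hk. rewrite plus_INR. destruct (HK k i ltac:(lia) ltac:(lia)) as [_ ->]. ring. }
 specialize (HSp (N + 1 - i)%nat). assert (0 <= INR i) by apply pos_INR.
 assert (INR i * sr (fun k => K i k * y k) (i + 1) (N + 1 - i) <= INR i * S) by (apply Rmult_le_compat_l; auto).
 lra. Qed.

Lemma sumD_Q0 K y i S N : Good K y i -> (forall M, sr (fun k => K i k * y k) (i + 1) M <= S) -> 0 <= S ->
  sr (fun j => INR j * Dv K y i S j) 1 (N + 1) <= 0.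
Proof. intros HG HSp HS0. destruct (le_lt_dec (2 * i) N).
 - eapply Rle_trans. apply sumD_Q; auto. destruct HG as [Hi [HK [Hy Hz]]].
   assert (0 <= sr (fun j => INR j * (K i j * y j)) (N + 1 - i) (N + 1)); [|lra].
   apply sr_nonneg. intros j Hj. apply Rmult_le_pos. apply pos_INR. apply Rmult_le_pos. apply HK; lia. apply Hy; lia.
 - destruct HG as [Hi [HK [Hy Hz]]]. destruct (le_lt_dec N i).
   + (* N <= i : only j < i or j = i *)
     destruct (Nat.eq_dec N i) as [->|].
     * rewrite (sr_split _ 1 i (i+1)) by lia. rewrite (sr_zero _ 1 i). 2:{ intros; rewrite Dv_low by lia; ring. }
       replace (i+1)%nat with (Datatypes.S i) by lia. rewrite sr_one, Dv_i.
       assert (0 <= K i i * y i) by (apply Rmult_le_pos; [apply HK|apply Hy]; lia).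
       assert (0 <= INR i) by apply pos_INR. nra.
     * rewrite sr_zero. lra. intros; rewrite Dv_low by lia; ring.
   + rewrite (sr_split _ 1 i (N+1)) by lia. rewrite (sr_split _ i (Datatypes.S i) (N+1)) by lia. rewrite sr_one.
     rewrite (sr_zero _ 1 i). 2:{ intros; rewrite Dv_low by lia; ring. } rewrite Dv_i.
     replace (Datatypes.S i) with (i+1)%nat by lia.
     rewrite (sr_ext _ (fun j => INR j * (K (j - i)%nat i * y (j - i)%nat) - INR j * (K i j * y j))).
     2:{ intros j Hj. rewrite Dv_high by lia. ring. }
     rewrite sr_minus. rewrite G_shift by lia. rewrite (sr_zero _ (i + 1 - i) (N + 1 - i)).
     2:{ intros k Hk. rewrite Hz by lia. ring. }
     assert (0 <= sr (fun j => INR j * (K i j * y j)) (i + 1) (N + 1)).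
     { apply sr_nonneg. intros j Hj. apply Rmult_le_pos. apply pos_INR. apply Rmult_le_pos. apply HK; lia. apply Hy; lia. }
     assert (0 <= K i i * y i) by (apply Rmult_le_pos; [apply HK|apply Hy]; lia).
     assert (0 <= INR i) by apply pos_INR. nra. Qed.

Lemma sumD_W K y i S n : Good K y i -> (n + 1 <= i <= 2 * n)%nat ->
  sr (fun j => 1 * Dv K y i S j) (n + 1) (2 * n + 1) = - 2 * K i i * y i - S - sr (fun j => K i j * y j) (i + 1) (2 * n + 1).
Proof. intros HG Hn. destruct HG as [Hi [HK [Hy Hz]]].
 rewrite (sr_split _ (n+1) i (2*n+1)) by lia. rewrite (sr_split _ i (i+1) (2*n+1)) by lia. rewrite sr_one'.
 rewrite (sr_zero _ (n+1) i). 2:{ intros; rewrite Dv_low by lia; ring. } rewrite Dv_i.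
 rewrite (sr_ext _ (fun j => - (K i j * y j))). rewrite sr_opp. ring.
 intros j Hj. rewrite Dv_high by lia. rewrite (Hz (j - i)%nat) by lia. ring. Qed.

Lemma sumD_B K y i S n N : Good K y i -> (n + 1 <= i <= 2 * n)%nat -> (4 * n <= N)%nat ->
  sr (fun j => 1 * Dv K y i S j) (2 * n + 1) (N + 1) =
  sr (fun k => K i k * y k) i (2 * n + 1) - sr (fun j => K i j * y j) (N + 1 - i) (N + 1).
Proof. intros HG Hn HN. destruct HG as [Hi [HK [Hy Hz]]].
 rewrite (sr_ext _ (fun j => 1 * (K (j - i)%nat i * y (j - i)%nat) - K i j * y j)).
 2:{ intros j Hj. rewrite Dv_high by lia. ring. }
 rewrite sr_minus. rewrite G_shift by lia.
 rewrite (sr_split _ (2*n+1-i) i (N+1-i)) by lia. rewrite (sr_split _ i (2*n+1) (N+1-i)) by lia.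
 rewrite (sr_zero _ (2*n+1-i) i). 2:{ intros k Hk. rewrite Hz by lia. ring. }
 rewrite (sr_split _ (2*n+1) (N+1-i) (N+1)) by lia.
 rewrite (sr_ext (fun k => 1 * (K k i * y k)) (fun k => K i k * y k) i (2*n+1)).
 rewrite (sr_ext (fun k => 1 * (K k i * y k)) (fun k => K i k * y k) (2*n+1) (N+1-i)).
 ring.
 intros k Hk. destruct (HK k i ltac:(lia) ltac:(lia)) as [_ ->]. ring.
 intros k Hk. destruct (HK k i ltac:(lia) ltac:(lia)) as [_ ->]. ring. Qed.


Lemma good_at K x0 ell t x (H : Hyp K x0 ell t x) s : in_domain t s -> Good K (x s) (ell s).
Proof. intros Hd. destruct (x_facts _ _ _ _ _ H s Hd) as [H1 [H2 [H3 _]]].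
 split; auto. split; auto. apply H. Qed.

Lemma interior_data K x0 ell t x (H : Hyp K x0 ell t x) i s (w : nat -> R) a b :
  (1 <= i)%nat -> t (i - 1)%nat < s < t i -> (1 <= a)%nat ->
  exists S, Good K (x s) i /\ 0 <= S /\ infinite_sum (uS K (x s) i) S /\
    (forall M, sr (fun k => K i k * x s k) (i + 1) M <= S) /\ 0 < x s i /\
    derivable_pt_lim (fun u => sr (fun j => w j * x u j) a b) s (sr (fun j => w j * Dv K (x s) i S j) a b).
Proof. intros Hi Hs Ha. destruct (interior _ _ _ _ _ H i s Hi Hs) as [Hd [Hk He]].
 destruct (wsum_deriv _ _ _ _ _ H s w a b Hd Hk Ha) as [S [HS HD]]. rewrite He in *.
 assert (HG := good_at _ _ _ _ _ H s Hd). rewrite He in HG.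
 exists S. split; auto. split. eapply inf_sum_nonneg; [apply uS_nonneg; eauto| eauto].
 split; auto. split. apply uS_partial; auto. split; auto.
 destruct (x_facts _ _ _ _ _ H s Hd) as [_ [_ [_ Hp]]]. rewrite He in Hp. auto. Qed.

Definition Qf (x : R -> nat -> R) N u := sr (fun j => INR j * x u j) 1 (N + 1).

Lemma RC_stage K x0 ell t x (H : Hyp K x0 ell t x) (w : nat -> R) C a b i :
  (1 <= a)%nat -> 0 <= C -> (forall j, (1 <= j)%nat -> Rabs (w j) <= C * INR j) -> (1 <= i)%nat ->
  RC (fun u => sr (fun j => w j * x u j) a b) (t (i - 1)%nat) (t i).
Proof. intros. eapply wsum_RC; eauto. apply (t_le _ _ _ _ _ H); lia.
 apply (dom_stage _ _ _ _ _ H i); auto. split. lra. apply (t_le _ _ _ _ _ H); lia.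
 apply (dom_stage _ _ _ _ _ H i); auto. split. apply (t_le _ _ _ _ _ H); lia. lra. Qed.

Lemma absINR j : (1 <= j)%nat -> Rabs (INR j) <= 1 * INR j.
Proof. intros _. rewrite Rabs_right. lra. apply Rle_ge, pos_INR. Qed.

Lemma Q_stage K x0 ell t x (H : Hyp K x0 ell t x) N i : (1 <= i)%nat ->
  forall p q, t (i - 1)%nat <= p /\ p <= q /\ q <= t i -> Qf x N q <= Qf x N p.
Proof. intros Hi. apply (stage_dec _ _ _ _ _ H); auto.
 - apply (RC_stage _ _ _ _ _ H _ 1); auto. lra. apply absINR.
 - intros s Hs. destruct (interior_data _ _ _ _ _ H i s INR 1 (N+1) Hi Hs ltac:(lia)) as [S [HG [HS0 [_ [Hp [_ HD]]]]]].
   eexists; split. apply HD. apply sumD_Q0; auto. Qed.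

Lemma Q0_le1 K x0 ell t x (H : Hyp K x0 ell t x) N : Qf x N 0 <= 1.
Proof. destruct H as [_ [Hx0 [Hn Hsol]]]. destruct Hsol as [_ [_ [_ [_ [_ [H0 _]]]]]].
 unfold Qf. rewrite (sr_ext _ (fun j => INR j * x0 j)) by (intros; rewrite H0; auto).
 apply Rle_trans with (sr (fun j => INR j * Rabs (x0 j)) 1 (N+1)).
 apply sr_le. intros. apply Rmult_le_compat_l. apply pos_INR. apply Rle_abs.
 eapply Rle_trans. apply sr_le_sum_f. intros; apply Rmult_le_pos. apply pos_INR. apply Rabs_pos.
 apply partial_le_inf_sum. intros; apply Rmult_le_pos. apply pos_INR. apply Rabs_pos. apply Hn. Qed.

Lemma Q_le1 K x0 ell t x (H : Hyp K x0 ell t x) N s : in_domain t s -> Qf x N s <= 1.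
Proof. intros [Hs [k Hk]]. eapply Rle_trans; [|apply (Q0_le1 _ _ _ _ _ H N)].
 assert (H0 : t 0%nat = 0) by (destruct H as [_ [_ [_ Hsol]]]; apply Hsol).
 apply (chain _ _ _ _ _ H (Qf x N) 0 k). intros i Hi. apply (Q_stage _ _ _ _ _ H). lia. lra. Qed.

Lemma Q_nonneg K x0 ell t x (H : Hyp K x0 ell t x) N s : in_domain t s -> 0 <= Qf x N s.
Proof. intros Hd. destruct (x_facts _ _ _ _ _ H s Hd) as [_ [Hp _]]. unfold Qf. apply sr_nonneg.
 intros. apply Rmult_le_pos. apply pos_INR. apply Hp; lia. Qed.

Lemma tail_count (y : nat -> R) a b N : (1 <= a)%nat -> (forall j, (1 <= j)%nat -> 0 <= y j) -> (b <= N + 1)%nat ->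
  sr y a b <= / INR a * sr (fun j => INR j * y j) 1 (N + 1).
Proof. intros Ha Hy Hb. assert (Hpa : 0 < INR a) by (apply lt_0_INR; lia).
 destruct (le_lt_dec b a). rewrite sr_empty by lia. apply Rmult_le_pos. left; apply Rinv_0_lt_compat; auto.
 apply sr_nonneg. intros; apply Rmult_le_pos. apply pos_INR. apply Hy; lia.
 apply Rle_trans with (/ INR a * sr (fun j => INR j * y j) a b).
 - rewrite <- sr_scal. apply sr_le. intros j Hj. assert (INR a <= INR j) by (apply le_INR; lia).
   assert (0 <= y j) by (apply Hy; lia).
   replace (y j) with (/ INR a * (INR a * y j)) at 1 by (field; lra).
   apply Rmult_le_compat_l. left; apply Rinv_0_lt_compat; auto. apply Rmult_le_compat_r; auto.
 - apply Rmult_le_compat_l. left; apply Rinv_0_lt_compat; auto.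
   rewrite (sr_split _ 1 a (N+1)) by lia. rewrite (sr_split _ a b (N+1)) by lia.
   assert (0 <= sr (fun j => INR j * y j) 1 a) by (apply sr_nonneg; intros; apply Rmult_le_pos; [apply pos_INR|apply Hy; lia]).
   assert (0 <= sr (fun j => INR j * y j) b (N+1)) by (apply sr_nonneg; intros; apply Rmult_le_pos; [apply pos_INR|apply Hy; lia]).
   lra. Qed.


Lemma ln_le x y : 0 < x -> x <= y -> ln x <= ln y.
Proof. intros Hx [Hl| ->]. left; apply ln_increasing; auto. lra. Qed.

Definition Pf (x : R -> nat -> R) N u := sr (fun j => 1 * x u j) 1 (N + 1).

Lemma exp_deriv r s : derivable_pt_lim (fun u => exp (r * u)) s (r * exp (r * s)).
Proof. assert (H := derivable_pt_lim_comp (fun u => r * u) exp s r (exp (r * s))).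
 replace (r * exp (r * s)) with (exp (r * s) * r) by ring. apply H.
 assert (H1 := derivable_pt_lim_scal id r s 1 (derivable_pt_lim_id s)). unfold mult_real_fct, id in H1.
 rewrite Rmult_1_r in H1. exact H1.
 apply derivable_pt_lim_exp. Qed.

Lemma P_stage K x0 ell t x (H : Hyp K x0 ell t x) A0 (HA : 0 < A0)
  (HKup : forall i j, (1 <= i)%nat -> (1 <= j)%nat -> K i j <= Rmin (ln (INR i + 1)) (ln (INR j + 1)) / (4 * A0))
  N i : (1 <= i)%nat -> (i <= N)%nat ->
  (Pf x N (t (i - 1)%nat) + / INR N) * exp (ln (INR i + 1) / A0 * t (i - 1)%nat) <=
  (Pf x N (t i) + / INR N) * exp (ln (INR i + 1) / A0 * t i).
Proof. intros Hi HN. set (r := ln (INR i + 1) / A0). set (c := ln (INR i + 1) / (4 * A0)).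
 assert (Hc0 : 0 <= c). { unfold c. apply Rmult_le_pos. rewrite <- ln_1. apply ln_le. lra.
   assert (0 <= INR i) by apply pos_INR. lra. left; apply Rinv_0_lt_compat; lra. }
 assert (Hr : r = 4 * c) by (unfold r, c; field; lra).
 assert (HKc : forall j, (1 <= j)%nat -> K i j <= c).
 { intros j Hj. eapply Rle_trans. apply HKup; auto. unfold c. unfold Rdiv. apply Rmult_le_compat_r.
   left; apply Rinv_0_lt_compat; lra. apply Rmin_l. }
 assert (HNp : 0 < INR N) by (apply lt_0_INR; lia).
 set (g := fun u => - ((Pf x N u + / INR N) * exp (r * u))).
 assert (g (t i) <= g (t (i - 1)%nat)); [|unfold g in *; lra].
 apply (stage_dec _ _ _ _ _ H g i Hi).
 - unfold g. intros s Hs eps He. apply (RC_scal (-1) (fun u => (Pf x N u + / INR N) * exp (r * u))) in Hs; auto.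
   + destruct (Hs eps He) as [d [Hd Hu]]. exists d; split; auto. intros u Hu1 Hu2.
     specialize (Hu u Hu1 Hu2). replace (- ((Pf x N u + / INR N) * exp (r * u)) - - ((Pf x N s + / INR N) * exp (r * s)))
       with (-1 * ((Pf x N u + / INR N) * exp (r * u)) - -1 * ((Pf x N s + / INR N) * exp (r * s))) by ring. auto.
   + apply RC_mult. apply RC_plus. unfold Pf. apply (RC_stage _ _ _ _ _ H _ 1); auto. lra.
     intros j Hj; rewrite Rabs_R1. assert (INR 1 <= INR j) by (apply le_INR; lia). simpl in H0. lra.
     apply RC_const. apply RC_exp.
 - intros s Hs. destruct (interior_data _ _ _ _ _ H i s (fun _ => 1) 1 (N+1) Hi Hs ltac:(lia)) as [S [HG [HS0 [HSi [Hp [Hpos HD]]]]]].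
   set (d := sr (fun j => 1 * Dv K (x s) i S j) 1 (N + 1)).
   exists (- (d * exp (r * s) + (Pf x N s + / INR N) * (r * exp (r * s)))). split.
   + apply derivable_pt_lim_opp with (f := fun u => (Pf x N u + / INR N) * exp (r * u)).
     apply derivable_pt_lim_mult with (f1 := fun u => Pf x N u + / INR N) (f2 := fun u => exp (r * u)).
     replace d with (d + 0) by ring. apply derivable_pt_lim_plus with (f1 := Pf x N) (f2 := fun _ => / INR N).
     apply HD. apply derivable_pt_lim_const. apply exp_deriv.
   + destruct HG as [Hi' [HK [Hy Hz]]].
     set (y := x s). fold y in HSi, Hp, Hy, Hz, d, HS0.
     assert (HP : Pf x N s = y i + sr y (i + 1) (N + 1)).
     { unfold Pf. rewrite (sr_split _ 1 i (N+1)) by lia. rewrite (sr_split _ i (i+1) (N+1)) by lia. rewrite sr_one'.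
       rewrite sr_zero. fold y. rewrite (sr_ext (fun j => 1 * y j) y). ring. intros; ring.
       intros j Hj. rewrite Hz by lia. ring. }
     assert (Hsy : 0 <= sr y (i + 1) (N + 1)) by (apply sr_nonneg; intros; apply Hy; lia).
     assert (Hyi : 0 <= y i) by (apply Hy; lia).
     assert (HSb : S <= c * (Pf x N s + / INR N)).
     { apply (uS_bound K y i S); auto. split; auto. intros M.
       apply Rle_trans with (c * sr y (i + 1) M).
       { rewrite <- sr_scal. apply sr_le. intros k Hk. apply Rmult_le_compat_r. apply Hy; lia. apply HKc; lia. }
       apply Rmult_le_compat_l; auto. rewrite HP. destruct (le_lt_dec M (N + 1)).
       - destruct (le_lt_dec M (i+1)). rewrite (sr_empty _ (i+1) M) by lia.
         assert (0 < / INR N) by (apply Rinv_0_lt_compat; auto). lra.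
         rewrite (sr_split y (i+1) M (N+1)) by lia. assert (0 <= sr y M (N+1)) by (apply sr_nonneg; intros; apply Hy; lia).
         assert (0 < / INR N) by (apply Rinv_0_lt_compat; auto). lra.
       - rewrite (sr_split y (i+1) (N+1) M) by lia.
         assert (sr y (N + 1) M <= / INR (N + 1) * sr (fun j => INR j * y j) 1 (M + 1)).
         { apply tail_count; auto. lia. lia. }
         assert (Hq : sr (fun j => INR j * y j) 1 (M + 1) <= 1).
         { apply (Q_le1 _ _ _ _ _ H M s). apply (interior _ _ _ _ _ H i s Hi Hs). }
         assert (Hq0 : 0 <= sr (fun j => INR j * y j) 1 (M + 1)).
         { apply sr_nonneg. intros; apply Rmult_le_pos. apply pos_INR. apply Hy; lia. }
         assert (/ INR (N + 1) <= / INR N). { apply Rinv_le_contravar; auto. apply le_INR; lia. }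
         assert (0 <= / INR (N+1)) by (left; apply Rinv_0_lt_compat; apply lt_0_INR; lia).
         assert (/ INR (N + 1) * sr (fun j => INR j * y j) 1 (M + 1) <= / INR N).
         { apply Rle_trans with (/ INR (N+1) * 1). apply Rmult_le_compat_l; auto. lra. }
         lra. }
     assert (Hd : - 4 * c * (Pf x N s + / INR N) <= d).
     { eapply Rle_trans; [|apply sumD_P; auto; split; auto].
       assert (K i i * y i <= c * y i) by (apply Rmult_le_compat_r; auto; apply HKc; lia).
       assert (sr (fun j => K i j * y j) (i + 1) (N + 1) <= c * sr y (i + 1) (N + 1)).
       { rewrite <- sr_scal. apply sr_le. intros k Hk. apply Rmult_le_compat_r. apply Hy; lia. apply HKc; lia. }
       rewrite HP in *. assert (0 < / INR N) by (apply Rinv_0_lt_compat; auto).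
       assert (0 <= c * / INR N) by (apply Rmult_le_pos; lra). nra. }
     assert (He : 0 < exp (r * s)) by apply exp_pos.
     assert (HPn : 0 <= Pf x N s + / INR N).
     { rewrite HP. assert (0 < / INR N) by (apply Rinv_0_lt_compat; auto). lra. }
     assert (0 <= (d + 4 * c * (Pf x N s + / INR N)) * exp (r * s)).
     { apply Rmult_le_pos; lra. }
     assert (E : forall e, d * e + (Pf x N s + / INR N) * (r * e) = (d + 4 * c * (Pf x N s + / INR N)) * e) by (intros; rewrite Hr; ring).
     rewrite E. lra.
 - split. lra. split. apply (t_le _ _ _ _ _ H); lia. lra. Qed.


Lemma accum K x0 ell t x (H : Hyp K x0 ell t x) (g : nat -> R) rho p q :
  (forall i, (p < i <= q)%nat -> g (i - 1)%nat - rho * (t i - t (i - 1)%nat) <= g i) -> (p <= q)%nat ->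
  g p - rho * (t q - t p) <= g q.
Proof. intros Hs Hpq. induction q.
 - assert (p = 0%nat) by lia. subst. lra.
 - destruct (Nat.eq_dec p (S q)) as [->|Hne]. lra.
   assert (IH := IHq ltac:(intros; apply Hs; lia) ltac:(lia)).
   assert (Hst := Hs (S q) ltac:(lia)). replace (S q - 1)%nat with q in Hst by lia. lra. Qed.

Lemma Pf_nonneg K x0 ell t x (H : Hyp K x0 ell t x) N s : in_domain t s -> 0 <= Pf x N s.
Proof. intros Hd. destruct (x_facts _ _ _ _ _ H s Hd) as [_ [Hp _]]. unfold Pf. apply sr_nonneg.
 intros. rewrite Rmult_1_l. apply Hp; lia. Qed.

Lemma t_dom K x0 ell t x (H : Hyp K x0 ell t x) k : in_domain t (t k).
Proof. split. apply (t_nonneg _ _ _ _ _ H). exists (S k). apply (t_strict _ _ _ _ _ H); lia. Qed.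

Lemma P_log_step K x0 ell t x (H : Hyp K x0 ell t x) A0 (HA : 0 < A0)
  (HKup : forall i j, (1 <= i)%nat -> (1 <= j)%nat -> K i j <= Rmin (ln (INR i + 1)) (ln (INR j + 1)) / (4 * A0))
  N i rho : (1 <= i)%nat -> (i <= N)%nat -> ln (INR i + 1) / A0 <= rho ->
  ln (Pf x N (t (i - 1)%nat) + / INR N) - rho * (t i - t (i - 1)%nat) <= ln (Pf x N (t i) + / INR N).
Proof. intros Hi HN Hrho. assert (Hst := P_stage _ _ _ _ _ H A0 HA HKup N i Hi HN).
 set (r := ln (INR i + 1) / A0) in *.
 assert (HNp : 0 < / INR N) by (apply Rinv_0_lt_compat, lt_0_INR; lia).
 assert (HA1 : 0 < Pf x N (t (i - 1)%nat) + / INR N) by (pose proof (Pf_nonneg _ _ _ _ _ H N _ (t_dom _ _ _ _ _ H (i-1))); lra).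
 assert (HB1 : 0 < Pf x N (t i) + / INR N) by (pose proof (Pf_nonneg _ _ _ _ _ H N _ (t_dom _ _ _ _ _ H i)); lra).
 apply ln_le in Hst. 2:{ apply Rmult_lt_0_compat; auto. apply exp_pos. }
 rewrite !ln_mult, !ln_exp in Hst by (auto; apply exp_pos).
 assert (Htt : t (i - 1)%nat <= t i) by (apply (t_le _ _ _ _ _ H); lia).
 assert (r * (t i - t (i-1)%nat) <= rho * (t i - t (i-1)%nat)) by (apply Rmult_le_compat_r; lra).
 lra. Qed.

Lemma part1 K x0 ell t x (H : Hyp K x0 ell t x) (Hx01 : 0 < x0 1%nat) :
  (exists A0, 0 < A0 /\ forall i j, (1 <= i)%nat -> (1 <= j)%nat ->
        K i j <= Rmin (ln (INR i + 1)) (ln (INR j + 1)) / (4 * A0)) -> cv_infty t.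
Proof. intros [A0 [HA HKup]]. apply NNPP. intros Hn.
 assert (HM : exists M, forall k, t k <= M).
 { apply not_all_ex_not in Hn. destruct Hn as [M HM]. exists M. intros k.
   destruct (Rle_dec (t k) M) as [|Hk]; auto. exfalso. apply HM. exists k. intros n Hnk.
   pose proof (t_le _ _ _ _ _ H k n Hnk). lra. }
 destruct HM as [M HM].
 destruct (growing_cv t) as [T HT].
 { intros k. apply (t_le _ _ _ _ _ H). lia. }
 { exists M. intros y [k ->]. auto. }
 destruct (HT (A0 / 4)) as [m Hm]. lra.
 assert (Htm : forall n, (m <= n)%nat -> t n - t m < A0 / 2).
 { intros n Hn2. assert (A := Hm n Hn2). assert (B := Hm m (le_n m)). unfold Rdist in *.
   apply Rabs_def2 in A. apply Rabs_def2 in B. lra. }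
 set (rm := ln (INR m + 1) / A0).
 set (C := ln 2 - ln (x0 1%nat) + rm * M).
 destruct (archimed (exp (2 * C) + INR m)) as [Har _].
 set (n := Z.to_nat (up (exp (2 * C) + INR m))).
 assert (Hn1 : exp (2 * C) + INR m < INR n).
 { unfold n. rewrite (INR_IZR_INZ (Z.to_nat _)). rewrite Z2Nat.id. exact Har. apply le_IZR. simpl.
   assert (0 < exp (2*C)) by apply exp_pos. assert (0 <= INR m) by apply pos_INR. lra. }
 assert (Hmn : (m <= n)%nat). { assert (INR m < INR n) by (pose proof (exp_pos (2*C)); lra). apply INR_lt in H0. lia. }
 set (N := S n). set (g := fun k => ln (Pf x N (t k) + / INR N)).
 assert (HNp : 0 < INR N) by (apply lt_0_INR; unfold N; lia).
 assert (A1 : g 0%nat - rm * (t m - t 0%nat) <= g m).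
 { apply (accum _ _ _ _ _ H g rm 0 m); [|lia]. intros i Hi. unfold g. apply (P_log_step _ _ _ _ _ H A0 HA HKup); [lia|unfold N; lia|].
   unfold rm. unfold Rdiv. apply Rmult_le_compat_r. left; apply Rinv_0_lt_compat; auto.
   apply ln_le. assert (0 <= INR i) by apply pos_INR. lra. assert (INR i <= INR m) by (apply le_INR; lia). lra. }
 set (rn := ln (INR n + 1) / A0).
 assert (A2 : g m - rn * (t n - t m) <= g n).
 { apply (accum _ _ _ _ _ H g rn m n); [|lia]. intros i Hi. unfold g. apply (P_log_step _ _ _ _ _ H A0 HA HKup); [lia|unfold N; lia|].
   unfold rn. unfold Rdiv. apply Rmult_le_compat_r. left; apply Rinv_0_lt_compat; auto.
   apply ln_le. assert (0 <= INR i) by apply pos_INR. lra. assert (INR i <= INR n) by (apply le_INR; lia). lra. }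
 assert (A0b : ln (x0 1%nat) <= g 0%nat).
 { unfold g. apply ln_le; auto. unfold Pf. rewrite (sr_split _ 1 2 (N+1)) by (unfold N; lia). replace 2%nat with (S 1) by lia.
   rewrite sr_one. assert (H0 : t 0%nat = 0) by (destruct H as [_ [_ [_ Hsol]]]; apply Hsol).
   assert (Hx0 : x 0 = x0) by (apply functional_extensionality; intros; destruct H as [_ [_ [_ Hsol]]]; apply Hsol).
   rewrite H0, Hx0. assert (0 <= sr (fun j => 1 * x0 j) 2 (N+1)).
   { apply sr_nonneg. intros. rewrite Rmult_1_l. destruct H as [_ [[_ Hp] _]]. apply Hp; lia. }
   assert (0 < / INR N) by (apply Rinv_0_lt_compat; auto). lra. }
 assert (A3 : g n <= ln 2 - ln (INR n + 1)).
 { unfold g. assert (Hd := t_dom _ _ _ _ _ H n).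
   assert (He : ell (t n) = S n) by (apply (ell_eq _ _ _ _ _ H); [lia|]; replace (S n - 1)%nat with n by lia; split; [lra|apply (t_strict _ _ _ _ _ H); lia]).
   destruct (x_facts _ _ _ _ _ H _ Hd) as [_ [Hp [Hz _]]]. rewrite He in Hz.
   assert (Hup : Pf x N (t n) <= / INR (S n)).
   { unfold Pf. rewrite (sr_split _ 1 (S n) (N+1)) by (unfold N; lia). rewrite (sr_zero _ 1 (S n)).
     2:{ intros; rewrite Hz by lia; ring. } rewrite Rplus_0_l.
     rewrite (sr_ext _ (x (t n))) by (intros; ring).
     eapply Rle_trans. apply (tail_count _ (S n) (N+1) N); auto. lia.
     pose proof (Q_le1 _ _ _ _ _ H N (t n) Hd). unfold Qf in H0.
     assert (0 < / INR (S n)) by (apply Rinv_0_lt_compat, lt_0_INR; lia).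
     replace (/ INR (S n)) with (/ INR (S n) * 1) at 2 by ring. apply Rmult_le_compat_l; lra. }
   assert (HP0 := Pf_nonneg _ _ _ _ _ H N _ Hd).
   assert (HNn : INR N = INR n + 1) by (unfold N; rewrite S_INR; auto).
   rewrite S_INR in Hup. rewrite HNn. assert (0 < INR n + 1) by (pose proof (pos_INR n); lra).
   replace (ln 2 - ln (INR n + 1)) with (ln (2 / (INR n + 1))).
   apply ln_le. assert (0 < / (INR n + 1)) by (apply Rinv_0_lt_compat; lra). lra. unfold Rdiv. lra.
   unfold Rdiv. rewrite ln_mult, ln_Rinv by (try apply Rinv_0_lt_compat; lra). ring. }
 assert (Hb1 : rm * (t m - t 0%nat) <= rm * M + rm * t 0%nat - rm * t 0%nat - rm * t 0%nat + rm * t 0%nat).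
 { assert (0 <= rm). { unfold rm, Rdiv. apply Rmult_le_pos. rewrite <- ln_1. apply ln_le. lra. pose proof (pos_INR m); lra.
     left; apply Rinv_0_lt_compat; auto. }
   pose proof (HM m). pose proof (t_nonneg _ _ _ _ _ H 0). nra. }
 assert (Hb2 : rn * (t n - t m) <= ln (INR n + 1) / 2).
 { assert (0 <= ln (INR n + 1)). { rewrite <- ln_1. apply ln_le. lra. pose proof (pos_INR n); lra. }
   assert (t n - t m < A0 / 2) by auto. assert (0 <= t n - t m) by (pose proof (t_le _ _ _ _ _ H m n Hmn); lra).
   unfold rn. replace (ln (INR n + 1) / 2) with (ln (INR n + 1) / A0 * (A0 / 2)) by (field; lra).
   apply Rmult_le_compat_l. unfold Rdiv; apply Rmult_le_pos; auto. left; apply Rinv_0_lt_compat; auto. lra. }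
 assert (Hfin : ln (INR n + 1) <= 2 * C) by (unfold C in *; lra).
 assert (2 * C < ln (INR n + 1)).
 { rewrite <- (ln_exp (2 * C)). apply ln_increasing. apply exp_pos. pose proof (pos_INR m). lra. }
 lra. Qed.


Lemma chain2 K x0 ell t x (H : Hyp K x0 ell t x) (g : R -> R) m M L U :
  (forall i, (m < i <= M)%nat -> forall p q, t (i-1)%nat <= p /\ p <= q /\ q <= t i -> L <= p -> q <= U -> g q <= g p) ->
  forall p q, t m <= p /\ p <= q /\ q <= t M -> L <= p -> q <= U -> g q <= g p.
Proof. induction M; intros HS p q Hpq HL HU.
 - destruct m. assert (p = q) by lra. subst; lra.
   pose proof (t_strict _ _ _ _ _ H 0 (S m) ltac:(lia)). lra.
 - destruct (le_lt_dec m M) as [HmM|HmM].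
   + destruct (Rle_dec q (t M)).
     * apply IHM; auto. intros i Hi. apply HS. lia. lra.
     * destruct (Rle_dec (t M) p).
       -- apply (HS (S M)); auto. lia. replace (S M - 1)%nat with M by lia. lra.
       -- apply Rle_trans with (g (t M)).
          ++ apply (HS (S M)); try lra. lia. replace (S M - 1)%nat with M by lia. lra.
          ++ apply IHM; try lra. intros i Hi. apply HS. lia.
   + assert (m = S M \/ (S M < m)%nat) as [->|Hlt] by lia.
     assert (p = q) by lra. subst; lra.
     pose proof (t_strict _ _ _ _ _ H (S M) m Hlt). lra. Qed.

Lemma stage_dec2 K x0 ell t x (H : Hyp K x0 ell t x) (g : R -> R) i L U : (1 <= i)%nat ->
  RC g (t (i-1)%nat) (t i) ->
  (forall s, t (i-1)%nat < s < t i -> L < s -> s < U -> exists l, derivable_pt_lim g s l /\ l <= 0) ->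
  forall p q, t (i-1)%nat <= p /\ p <= q /\ q <= t i -> L <= p -> q <= U -> g q <= g p.
Proof. intros Hi HR HD p q Hpq HL HU. apply mono_RC_dec. lra. eapply RC_sub; [| |apply HR]; lra.
 intros s Hs. apply HD; lra. Qed.

Lemma interior_data2 K x0 ell t x (H : Hyp K x0 ell t x) i s :
  (1 <= i)%nat -> t (i - 1)%nat < s < t i ->
  exists S, Good K (x s) i /\ 0 <= S /\ infinite_sum (uS K (x s) i) S /\
    (forall M, sr (fun k => K i k * x s k) (i + 1) M <= S) /\ 0 < x s i /\
    forall (w : nat -> R) a b, (1 <= a)%nat ->
    derivable_pt_lim (fun u => sr (fun j => w j * x u j) a b) s (sr (fun j => w j * Dv K (x s) i S j) a b).
Proof. intros Hi Hs. destruct (interior _ _ _ _ _ H i s Hi Hs) as [Hd [Hk He]].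
 destruct (deriv_comp _ _ _ _ _ H s Hd Hk) as [S [HS HD]]. rewrite He in *.
 assert (HG := good_at _ _ _ _ _ H s Hd). rewrite He in HG.
 exists S. split; auto. split. eapply inf_sum_nonneg; [apply uS_nonneg; eauto| eauto].
 split; auto. split. apply uS_partial; auto. split.
 destruct (x_facts _ _ _ _ _ H s Hd) as [_ [_ [_ Hp]]]. rewrite He in Hp. auto.
 intros w a b Ha. apply (sr_deriv (fun u j => w j * x u j)). intros j Hj.
 apply derivable_pt_lim_scal. apply HD. lia. Qed.

Definition Wf (x : R -> nat -> R) n u := sr (fun j => 1 * x u j) (n + 1) (2 * n + 1).
Definition Bf (x : R -> nat -> R) n N u := sr (fun j => 1 * x u j) (2 * n + 1) (N + 1).
Definition Yf (x : R -> nat -> R) n N u := Bf x n N u + (- 2 / INR N) * Qf x N u.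

Lemma window_derivs K x0 ell t x (H : Hyp K x0 ell t x) n N c i s :
  (1 <= n)%nat -> (4 * n <= N)%nat -> (n + 1 <= i <= 2 * n)%nat -> 0 <= c ->
  (forall a b, (n + 1 <= a)%nat -> (n + 1 <= b)%nat -> c <= K a b) ->
  t (i - 1)%nat < s < t i ->
  exists dW dY, derivable_pt_lim (Wf x n) s dW /\ derivable_pt_lim (Yf x n N) s dY /\
    dW <= - c * Bf x n N s /\ c * Wf x n s <= dY.
Proof. intros Hn HN Hi Hc HKc Hs.
 destruct (interior_data2 _ _ _ _ _ H i s ltac:(lia) Hs) as [S [HG [HS0 [HSi [Hp [Hpos HD]]]]]].
 set (y := x s) in *.
 exists (sr (fun j => 1 * Dv K y i S j) (n + 1) (2 * n + 1)).
 exists (sr (fun j => 1 * Dv K y i S j) (2 * n + 1) (N + 1) + (- 2 / INR N) * sr (fun j => INR j * Dv K y i S j) 1 (N + 1)).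
 destruct HG as [Hi1 [HK [Hy Hz]]].
 split. unfold Wf. apply HD; lia. split.
 { unfold Yf. apply derivable_pt_lim_plus with (f1 := Bf x n N) (f2 := fun u => - 2 / INR N * Qf x N u).
   unfold Bf. apply HD; lia. apply derivable_pt_lim_scal with (f := Qf x N). unfold Qf. apply HD; lia. }
 assert (HNp : 0 < INR N) by (apply lt_0_INR; lia).
 split.
 - rewrite sumD_W by (try split; auto; lia).
   specialize (Hp (N + 1)%nat). rewrite (sr_split _ (i+1) (2*n+1) (N+1)) in Hp by lia.
   assert (HB : c * Bf x n N s <= sr (fun k => K i k * y k) (2 * n + 1) (N + 1)).
   { unfold Bf. rewrite <- sr_scal. apply sr_le. intros k Hk. rewrite Rmult_1_l. fold y.
     apply Rmult_le_compat_r. apply Hy; lia. apply HKc; lia. }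
   assert (0 <= sr (fun j => K i j * y j) (i + 1) (2 * n + 1)).
   { apply sr_nonneg. intros. apply Rmult_le_pos. apply HK; lia. apply Hy; lia. }
   assert (0 <= K i i * y i) by (apply Rmult_le_pos; [apply HK|apply Hy]; lia).
   lra.
 - rewrite sumD_B with (n := n) by (try split; auto; lia).
   assert (HQ := sumD_Q K y i S N ltac:(split; auto) Hp HS0 ltac:(lia)).
   set (E := sr (fun j => K i j * y j) (N + 1 - i) (N + 1)) in *.
   set (T := sr (fun j => INR j * (K i j * y j)) (N + 1 - i) (N + 1)) in *.
   assert (HTE : INR N / 2 * E <= T).
   { unfold E, T. rewrite <- sr_scal. apply sr_le. intros j Hj.
     apply Rmult_le_compat_r. apply Rmult_le_pos. apply HK; lia. apply Hy; lia.
     assert (INR N <= 2 * INR j). { rewrite <- (INR_IZR_INZ 2) at 1. simpl (INR 2).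
       assert (INR N <= INR (2 * j)) by (apply le_INR; lia). rewrite mult_INR in H0. simpl in H0. lra. }
     lra. }
   assert (HE0 : 0 <= E). { apply sr_nonneg. intros. apply Rmult_le_pos. apply HK; lia. apply Hy; lia. }
   assert (HW : c * Wf x n s <= sr (fun k => K i k * y k) i (2 * n + 1)).
   { unfold Wf. rewrite (sr_split _ (n+1) i (2*n+1)) by lia. rewrite (sr_zero _ (n+1) i).
     2:{ intros k Hk. fold y. rewrite Hz by lia. ring. }
     rewrite Rplus_0_l, <- sr_scal. apply sr_le. intros k Hk. fold y. rewrite Rmult_1_l.
     apply Rmult_le_compat_r. apply Hy; lia. apply HKc; lia. }
   assert (- 2 / INR N * sr (fun j => INR j * Dv K y i S j) 1 (N + 1) >= 2 / INR N * T).
   { replace (- 2 / INR N * sr (fun j => INR j * Dv K y i S j) 1 (N + 1)) with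
       (2 / INR N * (- sr (fun j => INR j * Dv K y i S j) 1 (N + 1))) by (field; lra).
     apply Rle_ge. apply Rmult_le_compat_l. unfold Rdiv; apply Rmult_le_pos; [lra|left; apply Rinv_0_lt_compat; auto]. lra. }
   assert (2 / INR N * T >= E).
   { apply Rle_ge. apply Rle_trans with (2 / INR N * (INR N / 2 * E)).
     replace (2 / INR N * (INR N / 2 * E)) with E by (field; lra). lra.
     apply Rmult_le_compat_l. unfold Rdiv; apply Rmult_le_pos; [lra|left; apply Rinv_0_lt_compat; auto]. auto. }
   lra. Qed.

Lemma lin_deriv k s : derivable_pt_lim (fun u => k * u) s k.
Proof. assert (H1 := derivable_pt_lim_scal id k s 1 (derivable_pt_lim_id s)). unfold mult_real_fct, id in H1.
 rewrite Rmult_1_r in H1. exact H1. Qed.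

Lemma win_dec K x0 ell t x (H : Hyp K x0 ell t x) (g : R -> R) n L U :
  (forall i, (n < i <= 2 * n)%nat -> RC g (t (i-1)%nat) (t i)) ->
  (forall i s, (n < i <= 2 * n)%nat -> t (i-1)%nat < s < t i -> L < s -> s < U -> exists l, derivable_pt_lim g s l /\ l <= 0) ->
  t n <= L -> U <= t (2 * n)%nat -> L <= U -> g U <= g L.
Proof. intros HR HD H1 H2 H3. apply (chain2 _ _ _ _ _ H g n (2 * n) L U); try lra.
 intros i Hi p q Hpq HL HU. apply (stage_dec2 _ _ _ _ _ H g i L U); auto. lia.
 intros s Hs HLs HsU. apply (HD i); auto. Qed.

Lemma sr_x_nonneg K x0 ell t x (H : Hyp K x0 ell t x) s (w : nat -> R) a b : in_domain t s -> (1 <= a)%nat ->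
  (forall j, 0 <= w j) -> 0 <= sr (fun j => w j * x s j) a b.
Proof. intros Hd Ha Hw. destruct (x_facts _ _ _ _ _ H s Hd) as [_ [Hp _]]. apply sr_nonneg.
 intros. apply Rmult_le_pos; auto. apply Hp; lia. Qed.

Lemma window K x0 ell t x (H : Hyp K x0 ell t x) n c : (1 <= n)%nat -> 0 < c ->
  (forall a b, (n + 1 <= a)%nat -> (n + 1 <= b)%nat -> c <= K a b) ->
  t (2 * n)%nat - t n <= 2 / c.
Proof. intros Hn Hc HKc.
 set (a := t n). set (e := t (2 * n)%nat). set (h := (e - a) / 2). set (m := a + h).
 assert (Hae : a < e) by (apply (t_strict _ _ _ _ _ H); lia).
 assert (Hdom : forall u, a <= u <= e -> in_domain t u).
 { intros u Hu. split. pose proof (t_nonneg _ _ _ _ _ H n). unfold a in *; lra.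
   exists (S (2 * n)). pose proof (t_strict _ _ _ _ _ H (2*n) (S (2*n)) ltac:(lia)). unfold e in *; lra. }
 assert (Hstage_dom : forall i s, (n < i <= 2 * n)%nat -> t (i - 1)%nat < s < t i -> a <= s <= e).
 { intros i s Hi Hs. pose proof (t_le _ _ _ _ _ H n (i-1) ltac:(lia)). pose proof (t_le _ _ _ _ _ H i (2*n) ltac:(lia)).
   unfold a, e; lra. }
 assert (HRW : forall i, (n < i <= 2 * n)%nat -> RC (Wf x n) (t (i-1)%nat) (t i)).
 { intros i Hi. unfold Wf. apply (RC_stage _ _ _ _ _ H _ 1 _ _ i). lia. lra.
   intros j Hj. rewrite Rabs_R1. assert (INR 1 <= INR j) by (apply le_INR; lia). simpl in H0. lra. lia. }
 assert (HRY : forall N i, (n < i <= 2 * n)%nat -> RC (Yf x n N) (t (i-1)%nat) (t i)).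
 { intros N i Hi. unfold Yf. apply RC_plus. unfold Bf. apply (RC_stage _ _ _ _ _ H _ 1 _ _ i). lia. lra.
   intros j Hj. rewrite Rabs_R1. assert (INR 1 <= INR j) by (apply le_INR; lia). simpl in H0. lra. lia.
   apply RC_scal. unfold Qf. apply (RC_stage _ _ _ _ _ H _ 1 _ _ i). lia. lra. intros j Hj; apply absINR; auto. lia. }
 assert (HWnn : forall u, a <= u <= e -> 0 <= Wf x n u).
 { intros u Hu. unfold Wf. apply sr_x_nonneg with (K := K) (x0 := x0) (ell := ell) (t := t); auto. lia. intros; lra. }
 assert (HBnn : forall N u, a <= u <= e -> 0 <= Bf x n N u).
 { intros N u Hu. unfold Bf. apply sr_x_nonneg with (K := K) (x0 := x0) (ell := ell) (t := t); auto. lia. intros; lra. }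
 assert (HWmono : forall p q, a <= p -> p <= q -> q <= e -> Wf x n q <= Wf x n p).
 { intros p q H1 H2 H3. apply (win_dec _ _ _ _ _ H (Wf x n) n p q); auto.
   intros i s Hi Hs _ _. destruct (window_derivs _ _ _ _ _ H n (4 * n) c i s Hn ltac:(lia) ltac:(lia) ltac:(lra) HKc Hs)
     as [dW [dY [HdW [_ [HW _]]]]]. exists dW. split; auto.
   pose proof (HBnn (4 * n)%nat s (Hstage_dom i s Hi Hs)). nra. }
 assert (Hkey : forall N, (4 * n <= N)%nat -> Wf x n m * (c * c * h * h - 1) <= 2 * c * h / INR N).
 { intros N HN. assert (HNp : 0 < INR N) by (apply lt_0_INR; lia).
   assert (HYmono : forall p q, a <= p -> p <= q -> q <= e -> Yf x n N p <= Yf x n N q).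
   { intros p q H1 H2 H3. assert (- Yf x n N q <= - Yf x n N p); [|lra].
     apply (win_dec _ _ _ _ _ H (fun u => - Yf x n N u) n p q); auto.
     - intros i Hi s Hs eps He. destruct (RC_scal (-1) _ _ _ (HRY N i Hi) s Hs eps He) as [d [Hd Hu]].
       exists d. split; auto. intros u Hu1 Hu2. specialize (Hu u Hu1 Hu2).
       replace (- Yf x n N u - - Yf x n N s) with (-1 * Yf x n N u - -1 * Yf x n N s) by ring. auto.
     - intros i s Hi Hs _ _. destruct (window_derivs _ _ _ _ _ H n N c i s Hn HN ltac:(lia) ltac:(lra) HKc Hs)
         as [dW [dY [_ [HY [_ HdY]]]]]. exists (- dY). split. apply derivable_pt_lim_opp with (f := Yf x n N). auto.
       pose proof (HWnn s (Hstage_dom i s Hi Hs)). nra. }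
   assert (Ham : a <= m) by (unfold m, h; lra). assert (Hme : m <= e) by (unfold m, h; lra).
   assert (Hpsi : (-1) * Yf x n N m + (c * Wf x n m) * m <= (-1) * Yf x n N a + (c * Wf x n m) * a).
   { apply (win_dec _ _ _ _ _ H (fun u => (-1) * Yf x n N u + (c * Wf x n m) * u) n a m); auto; try (unfold a; lra).
     - intros i Hi. apply RC_plus. apply RC_scal. apply HRY; auto. apply (RC_scal _ (fun u => u)). apply RC_id.
     - intros i s Hi Hs Has Hsm. destruct (window_derivs _ _ _ _ _ H n N c i s Hn HN ltac:(lia) ltac:(lra) HKc Hs)
         as [dW [dY [_ [HY [_ HdY]]]]]. exists ((-1) * dY + c * Wf x n m). split.
       + apply derivable_pt_lim_plus with (f1 := fun u => -1 * Yf x n N u) (f2 := fun u => c * Wf x n m * u).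
         apply derivable_pt_lim_scal with (f := Yf x n N). auto. apply lin_deriv.
       + assert (Wf x n m <= Wf x n s) by (apply HWmono; lra). nra. }
   assert (Hphi : Wf x n e + (c * Yf x n N m) * e <= Wf x n m + (c * Yf x n N m) * m).
   { apply (win_dec _ _ _ _ _ H (fun u => Wf x n u + (c * Yf x n N m) * u) n m e); auto; try (unfold e; lra).
     - intros i Hi. apply RC_plus. apply HRW; auto. apply (RC_scal _ (fun u => u)). apply RC_id.
     - intros i s Hi Hs Hms Hse. destruct (window_derivs _ _ _ _ _ H n N c i s Hn HN ltac:(lia) ltac:(lra) HKc Hs)
         as [dW [dY [HW [_ [HdW _]]]]]. exists (dW + c * Yf x n N m). split.
       + apply derivable_pt_lim_plus with (f1 := Wf x n) (f2 := fun u => c * Yf x n N m * u). auto. apply lin_deriv.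
       + assert (Yf x n N m <= Yf x n N s) by (apply HYmono; lra).
         assert (Yf x n N s <= Bf x n N s).
         { unfold Yf. assert (0 <= Qf x N s) by (apply (Q_nonneg _ _ _ _ _ H); apply Hdom; lra).
           assert (0 <= 2 / INR N * Qf x N s) by (apply Rmult_le_pos; auto; unfold Rdiv; apply Rmult_le_pos; [lra|left; apply Rinv_0_lt_compat; auto]).
           replace (- 2 / INR N * Qf x N s) with (- (2 / INR N * Qf x N s)) by (field; lra). lra. }
         nra. }
   assert (HYa : - (2 / INR N) <= Yf x n N a).
   { unfold Yf. assert (Hq : Qf x N a <= 1) by (apply (Q_le1 _ _ _ _ _ H); apply Hdom; lra).
     assert (0 <= Qf x N a) by (apply (Q_nonneg _ _ _ _ _ H); apply Hdom; lra).
     pose proof (HBnn N a ltac:(lra)).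
     assert (2 / INR N * Qf x N a <= 2 / INR N). { replace (2 / INR N) with (2 / INR N * 1) at 2 by ring.
       apply Rmult_le_compat_l; auto. unfold Rdiv; apply Rmult_le_pos; [lra|left; apply Rinv_0_lt_compat; auto]. }
     replace (- 2 / INR N * Qf x N a) with (- (2 / INR N * Qf x N a)) by (field; lra). lra. }
   assert (HWe : 0 <= Wf x n e) by (apply HWnn; lra).
   assert (Hh : 0 <= h) by (unfold h; lra).
   assert (Hmh : m - a = h) by (unfold m; ring). assert (Hem : e - m = h) by (unfold m, h; field).
   assert (HY1 : Yf x n N a + c * Wf x n m * h <= Yf x n N m) by (rewrite <- Hmh; lra).
   assert (HW1 : Wf x n e <= Wf x n m - c * Yf x n N m * h) by (rewrite <- Hem; lra).
   assert (Hch : 0 <= c * h) by (apply Rmult_le_pos; lra).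
   assert (c * h * (Yf x n N a + c * Wf x n m * h) <= c * h * Yf x n N m) by (apply Rmult_le_compat_l; auto).
   assert (c * h * (- (2 / INR N)) <= c * h * Yf x n N a) by (apply Rmult_le_compat_l; auto).
   replace (2 * c * h / INR N) with (c * h * (2 / INR N)) by (field; lra).
   nra. }
 assert (HWm : 0 < Wf x n m).
 { assert (Hmd : in_domain t m) by (apply Hdom; unfold m, h; lra).
   destruct (locate _ _ _ _ _ H m Hmd) as [i [Hi Hmi]].
   assert (Hin : (n + 1 <= i <= 2 * n)%nat).
   { split.
     - destruct (le_lt_dec (n + 1) i); auto. pose proof (t_le _ _ _ _ _ H i n ltac:(lia)). unfold m, h, a in *; lra.
     - destruct (le_lt_dec i (2 * n)); auto. pose proof (t_le _ _ _ _ _ H (2*n) (i-1) ltac:(lia)). unfold m, h, e in *; lra. }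
   assert (He := ell_eq _ _ _ _ _ H i m Hi Hmi).
   destruct (x_facts _ _ _ _ _ H m Hmd) as [_ [Hp [_ Hpos]]]. rewrite He in Hpos.
   unfold Wf. rewrite (sr_split _ (n+1) i (2*n+1)) by lia. rewrite (sr_split _ i (S i) (2*n+1)) by lia. rewrite sr_one.
   assert (0 <= sr (fun j => 1 * x m j) (n+1) i) by (apply sr_nonneg; intros; rewrite Rmult_1_l; apply Hp; lia).
   assert (0 <= sr (fun j => 1 * x m j) (S i) (2*n+1)) by (apply sr_nonneg; intros; rewrite Rmult_1_l; apply Hp; lia).
   lra. }
 assert (Hh2 : c * c * h * h <= 1).
 { apply NNPP. intros Hn2. set (D := Wf x n m * (c * c * h * h - 1)).
   assert (HD : 0 < D) by (unfold D; apply Rmult_lt_0_compat; lra).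
   assert (Hh : 0 <= h) by (unfold h; lra).
   destruct (archimed (2 * c * h / D + INR (4 * n))) as [Har _].
   set (N := Z.to_nat (up (2 * c * h / D + INR (4 * n)))).
   assert (HN1 : 2 * c * h / D + INR (4 * n) < INR N).
   { unfold N. rewrite (INR_IZR_INZ (Z.to_nat _)). rewrite Z2Nat.id. exact Har. apply le_IZR. change (IZR 0) with 0.
     assert (0 <= 2 * c * h / D) by (unfold Rdiv; apply Rmult_le_pos; [apply Rmult_le_pos; [apply Rmult_le_pos|]; lra|left; apply Rinv_0_lt_compat; auto]).
     pose proof (pos_INR (4 * n)). lra. }
   assert (HN4 : (4 * n <= N)%nat).
   { assert (0 <= 2 * c * h / D) by (unfold Rdiv; apply Rmult_le_pos; [apply Rmult_le_pos; [apply Rmult_le_pos|]; lra|left; apply Rinv_0_lt_compat; auto]).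
     assert (INR (4 * n) < INR N) by lra. apply INR_lt in H1. lia. }
   assert (HNp : 0 < INR N) by (apply lt_0_INR; lia).
   specialize (Hkey N HN4). fold D in Hkey.
   assert (2 * c * h / D < INR N) by (pose proof (pos_INR (4 * n)); lra).
   assert (2 * c * h < INR N * D). { apply (Rmult_lt_compat_r D) in H0; auto. unfold Rdiv in H0.
     rewrite Rmult_assoc, Rinv_l in H0 by lra. lra. }
   assert (D * INR N <= 2 * c * h). { apply (Rmult_le_compat_r (INR N)) in Hkey. unfold Rdiv in Hkey.
     rewrite Rmult_assoc, Rinv_l in Hkey by lra. lra. lra. }
   lra. }
 assert (Hch : c * h <= 1).
 { assert (0 <= c * h) by (apply Rmult_le_pos; unfold h; lra). nra. }
 assert (e - a = 2 * h) by (unfold h; field). fold a e.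
 apply Rmult_le_reg_l with c; auto. replace (c * (2 / c)) with 2 by (field; lra). nra.
Qed.


Lemma Rpower_pos x y : 0 < Rpower x y.
Proof. unfold Rpower. apply exp_pos. Qed.

Lemma term_bound al k : 0 < al -> (1 <= k)%nat ->
  / Rpower (INR (S k)) (1 + al) <= / al * (Rpower (INR k) (- al) - Rpower (INR (S k)) (- al)).
Proof. intros Hal Hk. assert (Hk0 : 1 <= INR k) by (apply (le_INR 1); lia).
 rewrite S_INR.
 destruct (MVT_cor2 (fun u => Rpower u (- al)) (fun u => - al * Rpower u (- al - 1)) (INR k) (INR k + 1)) as [c [Hc1 Hc2]].
 lra. intros c Hc. apply derivable_pt_lim_power. lra.
 assert (E : Rpower c (- al - 1) = / Rpower c (1 + al)).
 { replace (- al - 1) with (- (1 + al)) by ring. apply Rpower_Ropp. }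
 rewrite E in Hc1.
 assert (Hmono : Rpower c (1 + al) <= Rpower (INR k + 1) (1 + al)) by (apply Rle_Rpower_l; lra).
 assert (Hp1 := Rpower_pos c (1 + al)). assert (Hp2 := Rpower_pos (INR k + 1) (1 + al)).
 assert (/ Rpower (INR k + 1) (1 + al) <= / Rpower c (1 + al)) by (apply Rinv_le_contravar; auto).
 replace (Rpower (INR k) (- al) - Rpower (INR k + 1) (- al)) with (al * / Rpower c (1 + al)).
 replace (/ al * (al * / Rpower c (1 + al))) with (/ Rpower c (1 + al)) by (field; lra). auto.
 replace (INR k + 1 - INR k) with 1 in Hc1 by ring. lra. Qed.

Lemma part2 K x0 ell t x (H : Hyp K x0 ell t x) :
  (exists a0 alpha, 0 < a0 /\ 0 < alpha /\
      forall i j, (1 <= i)%nat -> (1 <= j)%nat ->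
        a0 * Rpower (Rmin (ln (INR i + 1)) (ln (INR j + 1))) (1 + alpha) <= K i j) ->
  exists tinf, Un_cv t tinf.
Proof. intros [a0 [al [Ha0 [Hal HKl]]]].
 set (Cst := 2 / (a0 * Rpower (ln 2) (1 + al))).
 assert (Hln2 : 0 < ln 2) by (rewrite <- ln_1; apply ln_increasing; lra).
 assert (HCst : 0 < Cst) by (unfold Cst; apply Rdiv_lt_0_compat; [lra|apply Rmult_lt_0_compat; auto; apply Rpower_pos]).
 assert (Hwin : forall k, (1 <= k)%nat -> t (2 ^ S k)%nat - t (2 ^ k)%nat <= Cst * / Rpower (INR k) (1 + al)).
 { intros k Hk. set (n := (2 ^ k)%nat). assert (Hn : (1 <= n)%nat) by (unfold n; apply Nat.le_succ_l; apply Nat.neq_0_lt_0; apply Nat.pow_nonzero; lia).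
   set (c := a0 * Rpower (ln (INR n + 2)) (1 + al)).
   assert (Hl : 0 < ln (INR n + 2)) by (rewrite <- ln_1; apply ln_increasing; pose proof (pos_INR n); lra).
   assert (Hc : 0 < c) by (unfold c; apply Rmult_lt_0_compat; auto; apply Rpower_pos).
   replace (2 ^ S k)%nat with (2 * n)%nat by (unfold n; rewrite Nat.pow_succ_r'; auto).
   eapply Rle_trans. apply (window _ _ _ _ _ H n c Hn Hc).
   { intros a b Ha Hb. eapply Rle_trans; [|apply HKl; lia]. unfold c. apply Rmult_le_compat_l. lra.
     apply Rle_Rpower_l. lra. split; auto. pose proof (pos_INR n).
     assert (INR (n + 1) <= INR a) by (apply le_INR; lia). rewrite plus_INR in H1. change (INR 1) with 1 in H1.
     assert (INR (n + 1) <= INR b) by (apply le_INR; lia). rewrite plus_INR in H2. change (INR 1) with 1 in H2.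
     apply Rmin_glb; apply ln_le; lra. }
   assert (Hlk : INR k * ln 2 <= ln (INR n + 2)).
   { rewrite <- ln_pow by lra. apply ln_le. apply pow_lt; lra. unfold n. rewrite pow_INR. change (INR 2) with 2. lra. }
   assert (Hk0 : 0 < INR k) by (apply lt_0_INR; lia).
   assert (Hp : Rpower (INR k) (1 + al) * Rpower (ln 2) (1 + al) <= Rpower (ln (INR n + 2)) (1 + al)).
   { rewrite Rpower_mult_distr by auto. apply Rle_Rpower_l. lra. split; auto. apply Rmult_lt_0_compat; auto. }
   unfold Cst. assert (Hq1 := Rpower_pos (INR k) (1 + al)). assert (Hq2 := Rpower_pos (ln 2) (1 + al)).
   replace (2 / (a0 * Rpower (ln 2) (1 + al)) * / Rpower (INR k) (1 + al)) with (2 / (a0 * (Rpower (INR k) (1 + al) * Rpower (ln 2) (1 + al)))) by (field; lra).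
   unfold Rdiv. apply Rmult_le_compat_l. lra. apply Rinv_le_contravar. apply Rmult_lt_0_compat; auto. apply Rmult_lt_0_compat; auto.
   unfold c. apply Rmult_le_compat_l; lra. }
 assert (Hsum : forall K0, (1 <= K0)%nat -> t (2 ^ S K0)%nat <= t 2%nat + Cst * (1 + / al * (1 - Rpower (INR K0) (- al)))).
 { intros K0 HK0. induction K0. lia. destruct (Nat.eq_dec K0 0) as [->|HK].
   - simpl. specialize (Hwin 1%nat (le_n 1)). simpl in Hwin.
     assert (R1 : forall y, Rpower 1 y = 1) by (intros; unfold Rpower; rewrite ln_1, Rmult_0_r, exp_0; auto).
     rewrite R1 in *. rewrite Rinv_1 in Hwin. lra.
   - assert (IH := IHK0 ltac:(lia)). assert (W := Hwin (S K0) ltac:(lia)).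
     assert (TB := term_bound al K0 Hal ltac:(lia)).
     assert (Cst * / Rpower (INR (S K0)) (1 + al) <= Cst * (/ al * (Rpower (INR K0) (- al) - Rpower (INR (S K0)) (- al)))).
     { apply Rmult_le_compat_l; lra. }
     lra. }
 set (Bd := t 2%nat + Cst * (1 + / al)).
 assert (Hbd : forall n, t n <= Bd).
 { intros n. apply Rle_trans with (t (2 ^ S (S n))%nat).
   apply (t_le _ _ _ _ _ H). assert (S n < 2 ^ S n)%nat by (apply Nat.pow_gt_lin_r; lia).
   rewrite Nat.pow_succ_r'. lia.
   eapply Rle_trans. apply Hsum. lia. unfold Bd.
   assert (0 <= Cst * / al * Rpower (INR (S n)) (- al)).
   { apply Rmult_le_pos. apply Rmult_le_pos. lra. left; apply Rinv_0_lt_compat; auto. left; apply Rpower_pos. }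
   nra. }
 destruct (growing_cv t) as [T HT].
 { intros k. apply (t_le _ _ _ _ _ H). lia. }
 { exists Bd. intros y [k ->]. auto. }
 exists T. auto. Qed.

Theorem theorem1p3
  (K : nat -> nat -> R) (kappa : R) (x0 : nat -> R)
  (ell : R -> nat) (t : nat -> R) (x : R -> nat -> R)
  (Hkappa : 0 < kappa)
  (HK : forall i j, (1 <= i)%nat -> (1 <= j)%nat ->
          0 <= K i j /\ K i j = K j i /\ K i j <= kappa * INR i * INR j)
  (Hdelta : forall i, (1 <= i)%nat ->
          exists d, 0 < d /\ forall j, (i <= j)%nat -> d <= K i j)
  (Hx0 : in_X11_plus x0) (Hx01 : 0 < x0 1%nat) (Hnorm : norm11_is x0 1)
  (Hsol : is_min_driven_solution K x0 ell t x) :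
  ((exists A0, 0 < A0 /\
      forall i j, (1 <= i)%nat -> (1 <= j)%nat ->
        K i j <= Rmin (ln (INR i + 1)) (ln (INR j + 1)) / (4 * A0)) ->
     cv_infty t)
  /\
  ((exists a0 alpha, 0 < a0 /\ 0 < alpha /\
      forall i j, (1 <= i)%nat -> (1 <= j)%nat ->
        a0 * Rpower (Rmin (ln (INR i + 1)) (ln (INR j + 1))) (1 + alpha) <= K i j) ->
     exists tinf, Un_cv t tinf).
Proof.
  assert (H : Hyp K x0 ell t x).
  { split. intros i j Hi Hj. destruct (HK i j Hi Hj) as [A [B _]]. auto. auto. }
  split. apply (part1 _ _ _ _ _ H Hx01). apply (part2 _ _ _ _ _ H).
Qed.
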